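(* Let $\rho,\delta>0$, $f\in A_\rho(\mathbb{C}^\ell,\mathbb{C}^d)$, and let $E=A_\delta(\mathbb{C}^m,\mathbb{C}^\ell)$, $F=A_\delta(\mathbb{C}^m,\mathbb{C}^d)$. Let $E(\rho)=\{g\in E:\|g\|_\delta\le\rho\}$. Then the operator $\mathcal{C}_f:E(\rho)\to F$, $\mathcal{C}_f(g)=f\circ g$, is well defined and analytic in the sense that $\mathcal{C}_f\in A_\rho(E,F)$; moreover $\|\mathcal{C}_f\|_{A_\rho(E,F)}\le\|f\|_\rho$.
   Context: Sup norm $\|\eta\|_\infty=\max_i|\eta_i|$ on $\mathbb{C}^s$; $\mathbb{C}^r(\rho)=\{z:\|z\|_\infty\le\rho\}$; multi-index notation $z^\alpha$, $|\alpha|$. For $\rho>0$, $A_\rho(\mathbb{C}^r,\mathbb{C}^s)$ is the Banach space of $f:\mathbb{C}^r(\rho)\to\mathbb{C}^s$, $f(z)=\sum_{k\ge0}\sum_{|\alpha|=k}z^\alpha\eta_\alpha$ with norm $\|f\|_\rho=\sum_{k\ge0}(\sum_{|\alpha|=k}\|\eta_\alpha\|_\infty)\rho^k<\infty$. For Banach spaces $E,F$, $\mathcal{S}_k(E,F)$ denotes bounded symmetric $k$-linear maps $E^k\to F$; here it is normed by $\|b\|=\sup\{\|b(g_1,\ldots,g_k)\|_F:\|g_1\|_E=\cdots=\|g_k\|_E=1\}$. $A_\rho(E,F)$ denotes the space of maps $\Psi$ on the closed ball $E(\rho)$ of the form $\Psi(x)=\sum_{k\ge0}b_k(x,\ldots,x)$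 with $b_k\in\mathcal{S}_k(E,F)$ and $\|\Psi\|_{A_\rho(E,F)}=\sum_k\|b_k\|\rho^k<\infty$. *)

(* Defs.v *)
From Stdlib Require Import Reals List Arith ClassicalEpsilon.
Import ListNotations.
Open Scope R_scope.

Definition C : Type := (R * R)%type.
Definition C0 : C := (0, 0).
Definition C1 : C := (1, 0).
Definition Cadd (x y : C) : C := (fst x + fst y, snd x + snd y).
Definition Copp (x : C) : C := (- fst x, - snd x).
Definition Csub (x y : C) : C := Cadd x (Copp y).
Definition Cmul (x y : C) : C :=
  (fst x * fst y - snd x * snd y, fst x * snd y + snd x * fst y).
Fixpoint Cpow (x : C) (n : nat) : C :=
  match n with O => C1 | S n => Cmul x (Cpow x n) end.
Definition Cmod (x : C) : R := sqrt (fst x * fst x + snd x * snd x).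
Fixpoint Csum (u : nat -> C) (n : nat) : C :=
  match n with O => u O | S n => Cadd (Csum u n) (u (S n)) end.
Definition Clsum (l : list C) : C := fold_right Cadd C0 l.
Definition Ccv (u : nat -> C) (lim : C) : Prop :=
  Un_cv (fun n => fst (u n)) (fst lim) /\ Un_cv (fun n => snd (u n)) (snd lim).

(* ---------- vectors of C^s : only the components i < s matter ---------- *)
Definition vec : Type := nat -> C.
Fixpoint vnorm (s : nat) (v : vec) : R :=
  match s with O => 0 | S s => Rmax (vnorm s v) (Cmod (v s)) end.
Definition polydisc (r : nat) (rho : R) (z : vec) : Prop :=
  forall i, (i < r)%nat -> Cmod (z i) <= rho.

(* a multi-index alpha in N^r is a list of length r *)
Fixpoint mi (r k : nat) : list (list nat) :=
  match r with
  | O => match k with O => [ [] ] | S _ => [] end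
  | S r' => flat_map (fun j => map (cons j) (mi r' (k - j))) (seq 0 (S k))
  end.
Fixpoint mono_from (i : nat) (z : vec) (alpha : list nat) : C :=
  match alpha with
  | [] => C1
  | a :: t => Cmul (Cpow (z i) a) (mono_from (S i) z t)
  end.
Definition mono (z : vec) (alpha : list nat) : C := mono_from 0 z alpha.

Definition coef : Type := list nat -> vec.
Definition hom_part (r : nat) (eta : coef) (k : nat) (z : vec) : vec :=
  fun i => Clsum (map (fun alpha => Cmul (mono z alpha) (eta alpha i)) (mi r k)).
Definition norm_term (r s : nat) (rho : R) (eta : coef) (k : nat) : R :=
  fold_right Rplus 0 (map (fun alpha => vnorm s (eta alpha)) (mi r k)) * rho ^ k.

(* maps C^r(rho) -> C^s (total functions; only values on the polydisc and
   components i < s matter) *)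
Definition fn : Type := vec -> vec.
Definition represents (r s : nat) (rho : R) (f : fn) (eta : coef) : Prop :=
  forall z, polydisc r rho z -> forall i, (i < s)%nat ->
    Ccv (fun n => Csum (fun k => hom_part r eta k z i) n) (f z i).
Definition Anorm_is (r s : nat) (rho : R) (f : fn) (N : R) : Prop :=
  exists eta : coef, represents r s rho f eta /\
    infinite_sum (norm_term r s rho eta) N.
Definition inA (r s : nat) (rho : R) (f : fn) : Prop :=
  exists N, Anorm_is r s rho f N.
(* the norm ||f||_rho (well defined by uniqueness of power-series coefficients) *)
Definition Anorm (r s : nat) (rho : R) (f : fn) : R :=
  epsilon (inhabits 0) (Anorm_is r s rho f).
Definition Aeq (r s : nat) (rho : R) (f g : fn) : Prop :=
  forall z, polydisc r rho z -> forall i, (i < s)%nat -> f z i = g z i.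

Definition fadd (f g : fn) : fn := fun z i => Cadd (f z i) (g z i).
Definition fsub (f g : fn) : fn := fun z i => Csub (f z i) (g z i).
Definition fscal (a : C) (f : fn) : fn := fun z i => Cmul a (f z i).
Definition fzero : fn := fun _ _ => C0.
Fixpoint fsum (u : nat -> fn) (n : nat) : fn :=
  match n with O => u O | S n => fadd (fsum u n) (u (S n)) end.

(* ---------- bounded symmetric k-linear maps E^k -> F ----------
   E = A_delta(C^m,C^l), F = A_delta(C^m,C^d).  A k-linear map is
   b : (nat -> fn) -> fn, of which only the arguments 0..k-1 are used. *)
Definition upd (g : nat -> fn) (j : nat) (x : fn) : nat -> fn :=
  fun i => if Nat.eqb i j then x else g i.
Definition is_perm (k : nat) (sigma : nat -> nat) : Prop :=
  (forall i, (i < k)%nat -> (sigma i < k)%nat) /\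
  (forall i j, (i < k)%nat -> (j < k)%nat -> sigma i = sigma j -> i = j).

Definition sym_multilinear (m l d : nat) (delta : R) (k : nat)
    (b : (nat -> fn) -> fn) : Prop :=
  (forall g, (forall i, (i < k)%nat -> inA m l delta (g i)) ->
     inA m d delta (b g)) /\
  (forall g g', (forall i, (i < k)%nat -> inA m l delta (g i)) ->
     (forall i, (i < k)%nat -> inA m l delta (g' i)) ->
     (forall i, (i < k)%nat -> Aeq m l delta (g i) (g' i)) ->
     Aeq m d delta (b g) (b g')) /\
  (forall g j x y (a : C), (j < k)%nat ->
     (forall i, (i < k)%nat -> inA m l delta (g i)) ->
     inA m l delta x -> inA m l delta y ->
     Aeq m d delta (b (upd g j (fadd (fscal a x) y)))
                   (fadd (fscal a (b (upd g j x))) (b (upd g j y)))) /\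
  (forall g sigma, is_perm k sigma ->
     (forall i, (i < k)%nat -> inA m l delta (g i)) ->
     Aeq m d delta (b (fun i => g (sigma i))) (b g)).

(* ||b|| = sup { ||b(g_1,...,g_k)||_F : ||g_1||_E = ... = ||g_k||_E = 1 }
   (with 0 adjoined, so that the sup is 0 when the unit sphere is empty);
   the existence of this lub is the boundedness of b. *)
Definition opnorm_is (m l d : nat) (delta : R) (k : nat)
    (b : (nat -> fn) -> fn) (N : R) : Prop :=
  is_lub (fun x => x = 0 \/
            exists g : nat -> fn,
              (forall i, (i < k)%nat ->
                 inA m l delta (g i) /\ Anorm m l delta (g i) = 1) /\
              x = Anorm m d delta (b g)) N.

(* Main.v *)
Require Import Defs.
From Stdlib Require Import Reals List Arith Lia Lra Psatz ClassicalEpsilon Classical FunctionalExtensionality Permutation ListDec.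
Require Import Defs.
Import ListNotations.
Open Scope R_scope.

Lemma Ceq (x y : C) : fst x = fst y -> snd x = snd y -> x = y.
Proof. destruct x, y; simpl; intros; subst; reflexivity. Qed.

Lemma C_ring : ring_theory C0 C1 Cadd Cmul Csub Copp (@eq C).
Proof.
  constructor; intros; apply Ceq; unfold C0, C1, Cadd, Cmul, Csub, Copp; simpl; ring.
Qed.
Add Ring Cring : C_ring.

Lemma Cmod_ge0 x : 0 <= Cmod x.
Proof. apply sqrt_pos. Qed.

Lemma Cmod_mul x y : Cmod (Cmul x y) = Cmod x * Cmod y.
Proof.
  destruct x as [a b], y as [c d]; unfold Cmod, Cmul; simpl.
  rewrite <- sqrt_mult by nra. f_equal; ring.
Qed.

Lemma Cmod_add x y : Cmod (Cadd x y) <= Cmod x + Cmod y.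
Proof.
  destruct x as [a b], y as [c d]; unfold Cmod, Cadd; simpl.
  pose proof (sqrt_cauchy a b c d) as H. unfold Rsqr in H.
  pose proof (sqrt_pos (a*a+b*b)). pose proof (sqrt_pos (c*c+d*d)).
  rewrite <- (sqrt_square (sqrt (a * a + b * b) + sqrt (c * c + d * d))) by lra.
  apply sqrt_le_1_alt.
  pose proof (sqrt_sqrt (a*a+b*b)). pose proof (sqrt_sqrt (c*c+d*d)). nra.
Qed.

Lemma Cmod_fst x : Rabs (fst x) <= Cmod x.
Proof.
  destruct x as [a b]; unfold Cmod; simpl.
  rewrite <- sqrt_Rsqr_abs. apply sqrt_le_1_alt. unfold Rsqr; nra.
Qed.
Lemma Cmod_snd x : Rabs (snd x) <= Cmod x.
Proof.
  destruct x as [a b]; unfold Cmod; simpl.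
  rewrite <- sqrt_Rsqr_abs. apply sqrt_le_1_alt. unfold Rsqr; nra.
Qed.
Lemma Cmod_le_abs x : Cmod x <= Rabs (fst x) + Rabs (snd x).
Proof.
  destruct x as [a b]; unfold Cmod; simpl.
  rewrite <- (sqrt_square (Rabs a + Rabs b)) by (pose proof (Rabs_pos a); pose proof (Rabs_pos b); lra).
  apply sqrt_le_1_alt.
  unfold Rabs; destruct (Rcase_abs a), (Rcase_abs b); nra.
Qed.
Lemma Cmod_C0 : Cmod C0 = 0.
Proof. unfold Cmod, C0; simpl. replace (0*0+0*0) with 0 by ring. apply sqrt_0. Qed.
Lemma Cmod_C1 : Cmod C1 = 1.
Proof. unfold Cmod, C1; simpl. replace (1*1+0*0) with 1 by ring. apply sqrt_1. Qed.
Lemma Cmod_real t : Cmod (t, 0) = Rabs t.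
Proof. unfold Cmod; simpl. rewrite <- sqrt_Rsqr_abs. f_equal. unfold Rsqr; ring. Qed.
Lemma Cmod_pow x n : Cmod (Cpow x n) = Cmod x ^ n.
Proof. induction n; simpl. apply Cmod_C1. rewrite Cmod_mul, IHn; ring. Qed.
Lemma Cmod_opp x : Cmod (Copp x) = Cmod x.
Proof. unfold Cmod, Copp; simpl. f_equal; ring. Qed.
Lemma Cmod_sub x y : Cmod (Csub x y) <= Cmod x + Cmod y.
Proof. unfold Csub. rewrite <- (Cmod_opp y). apply Cmod_add. Qed.
Lemma Cmod_sub_sym x y : Cmod (Csub x y) = Cmod (Csub y x).
Proof. unfold Cmod, Csub, Cadd, Copp; simpl. f_equal; ring. Qed.
Lemma Cmod_eq0 x : Cmod x = 0 -> x = C0.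
Proof.
  intro H. pose proof (Cmod_fst x). pose proof (Cmod_snd x).
  apply Ceq; simpl.
  - rewrite H in H0. pose proof (Rabs_pos (fst x)). destruct (Req_dec (fst x) 0) as [E|E]; [exact E|]; pose proof (Rabs_pos_lt _ E); lra.
  - rewrite H in H1. pose proof (Rabs_pos (snd x)). destruct (Req_dec (snd x) 0) as [E|E]; [exact E|]; pose proof (Rabs_pos_lt _ E); lra.
Qed.

Lemma Cpow_add x a b : Cpow x (a + b) = Cmul (Cpow x a) (Cpow x b).
Proof. induction a; simpl. ring. rewrite IHa; ring. Qed.

Definition Cr (t : R) : C := (t, 0).
Lemma Cpow_real_mul t x n : Cpow (Cmul (Cr t) x) n = Cmul (Cr (t ^ n)) (Cpow x n).
Proof.
  induction n; simpl. apply Ceq; unfold Cr, C1, Cmul; simpl; ring.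
  rewrite IHn. apply Ceq; unfold Cr, Cmul; simpl; ring.
Qed.
Lemma Cr_mul a b : Cmul (Cr a) (Cr b) = Cr (a * b).
Proof. apply Ceq; unfold Cr, Cmul; simpl; ring. Qed.
Lemma Cr_one : Cr 1 = C1. Proof. reflexivity. Qed.
Lemma Cr_fst t x : fst (Cmul (Cr t) x) = t * fst x.
Proof. unfold Cr, Cmul; simpl; ring. Qed.
Lemma Cr_snd t x : snd (Cmul (Cr t) x) = t * snd x.
Proof. unfold Cr, Cmul; simpl; ring. Qed.

Lemma Clsum_app l1 l2 : Clsum (l1 ++ l2) = Cadd (Clsum l1) (Clsum l2).
Proof. induction l1; simpl. unfold Clsum; simpl; ring. unfold Clsum in *; simpl; rewrite IHl1; ring. Qed.
Lemma Clsum_cons a l : Clsum (a :: l) = Cadd a (Clsum l).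
Proof. reflexivity. Qed.
Lemma Clsum_nil : Clsum [] = C0.
Proof. reflexivity. Qed.
Lemma Clsum_map_add {A} (f g : A -> C) l :
  Clsum (map (fun x => Cadd (f x) (g x)) l) = Cadd (Clsum (map f l)) (Clsum (map g l)).
Proof. induction l; cbn [map]. unfold Clsum; simpl; ring. rewrite !Clsum_cons, IHl; ring. Qed.
Lemma Clsum_map_mull {A} (a : C) (f : A -> C) l :
  Clsum (map (fun x => Cmul a (f x)) l) = Cmul a (Clsum (map f l)).
Proof. induction l; cbn [map]. unfold Clsum; simpl; ring. rewrite !Clsum_cons, IHl; ring. Qed.
Lemma Clsum_map_ext {A} (f g : A -> C) l :
  (forall x, In x l -> f x = g x) -> Clsum (map f l) = Clsum (map g l).
Proof. intro H. f_equal. apply map_ext_in. exact H. Qed.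
Lemma Clsum_map_zero {A} (f : A -> C) l :
  (forall x, In x l -> f x = C0) -> Clsum (map f l) = C0.
Proof. induction l; cbn [map]; intros H. reflexivity. rewrite Clsum_cons, (H a (or_introl eq_refl)), IHl by (intros; apply H; right; assumption). ring. Qed.
Lemma Clsum_flat_map {A B} (g : A -> list B) (f : B -> C) l :
  Clsum (map f (flat_map g l)) = Clsum (map (fun a => Clsum (map f (g a))) l).
Proof. induction l; cbn [map flat_map]. reflexivity. rewrite map_app, Clsum_app, Clsum_cons, IHl. reflexivity. Qed.

Definition Rlsum (l : list R) : R := fold_right Rplus 0 l.
Lemma Rlsum_app l1 l2 : Rlsum (l1 ++ l2) = Rlsum l1 + Rlsum l2.
Proof. induction l1; simpl. ring. unfold Rlsum in *; simpl; rewrite IHl1; ring. Qed.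
Lemma Rlsum_map_add {A} (f g : A -> R) l :
  Rlsum (map (fun x => f x + g x) l) = Rlsum (map f l) + Rlsum (map g l).
Proof. induction l; simpl. unfold Rlsum; simpl; ring. unfold Rlsum in *; simpl; rewrite IHl; ring. Qed.
Lemma Rlsum_map_mull {A} (a : R) (f : A -> R) l :
  Rlsum (map (fun x => a * f x) l) = a * Rlsum (map f l).
Proof. induction l; simpl. unfold Rlsum; simpl; ring. unfold Rlsum in *; simpl; rewrite IHl; ring. Qed.
Lemma Rlsum_le {A} (f g : A -> R) l :
  (forall x, In x l -> f x <= g x) -> Rlsum (map f l) <= Rlsum (map g l).
Proof. induction l; simpl; intros H. unfold Rlsum; simpl; lra. unfold Rlsum in *; simpl. pose proof (H a (or_introl eq_refl)). pose proof (IHl (fun x h => H x (or_intror h))). lra. Qed.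
Lemma Rlsum_ge0 {A} (f : A -> R) l :
  (forall x, In x l -> 0 <= f x) -> 0 <= Rlsum (map f l).
Proof. induction l; simpl; intros H. unfold Rlsum; simpl; lra. unfold Rlsum in *; simpl. pose proof (H a (or_introl eq_refl)). pose proof (IHl (fun x h => H x (or_intror h))). lra. Qed.
Lemma Rlsum_flat_map {A B} (g : A -> list B) (f : B -> R) l :
  Rlsum (map f (flat_map g l)) = Rlsum (map (fun a => Rlsum (map f (g a))) l).
Proof. induction l; simpl. reflexivity. rewrite map_app, Rlsum_app, IHl. reflexivity. Qed.
Lemma Rlsum_map_ext {A} (f g : A -> R) l :
  (forall x, In x l -> f x = g x) -> Rlsum (map f l) = Rlsum (map g l).
Proof. intro H. f_equal. apply map_ext_in. exact H. Qed.
Lemma Rlsum_const {A} (c : R) (l : list A) : Rlsum (map (fun _ => c) l) = INR (length l) * c.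
Proof. induction l; cbn [map length]. unfold Rlsum; simpl; ring. unfold Rlsum in *; cbn [fold_right]; rewrite IHl. rewrite (S_INR (length l)). ring. Qed.

Lemma Cmod_Clsum {A} (f : A -> C) l : Cmod (Clsum (map f l)) <= Rlsum (map (fun x => Cmod (f x)) l).
Proof.
  induction l; cbn [map]. rewrite Clsum_nil, Cmod_C0. unfold Rlsum; simpl; lra.
  rewrite Clsum_cons. unfold Rlsum in *; cbn [fold_right]. pose proof (Cmod_add (f a) (Clsum (map f l))). lra.
Qed.
Lemma fst_Clsum {A} (f : A -> C) l : fst (Clsum (map f l)) = Rlsum (map (fun x => fst (f x)) l).
Proof. induction l; simpl. reflexivity. unfold Rlsum in *; simpl. rewrite <- IHl. reflexivity. Qed.
Lemma snd_Clsum {A} (f : A -> C) l : snd (Clsum (map f l)) = Rlsum (map (fun x => snd (f x)) l).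
Proof. induction l; simpl. reflexivity. unfold Rlsum in *; simpl. rewrite <- IHl. reflexivity. Qed.

Lemma ser_ex (u a : nat -> R) (A : R) :
  (forall n, Rabs (u n) <= a n) -> infinite_sum a A -> exists U, infinite_sum u U.
Proof.
  intros H HA.
  assert (Ha: {l | Un_cv (fun N => sum_f_R0 a N) l}) by (exists A; exact HA).
  destruct (Rseries_CV_comp (fun n => Rabs (u n)) a) as [l1 H1].
  { intro n. split. apply Rabs_pos. apply H. } exact Ha.
  destruct (Rseries_CV_comp (fun n => u n + Rabs (u n)) (fun n => 2 * a n)) as [l2 H2].
  { intro n. pose proof (H n). split. unfold Rabs in *; destruct (Rcase_abs (u n)); lra.
    unfold Rabs in *; destruct (Rcase_abs (u n)); lra. }
  { exists (2 * A). intros e he. destruct (HA (e/2)) as [N HN]. lra. exists N. intros n hn.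
    specialize (HN n hn). unfold Rdist in *.
    replace (sum_f_R0 (fun n => 2 * a n) n) with (2 * sum_f_R0 a n) by (rewrite scal_sum; apply sum_eq; intros; ring).
    replace (2 * sum_f_R0 a n - 2 * A) with (2 * (sum_f_R0 a n - A)) by ring.
    rewrite Rabs_mult, Rabs_right by lra. lra. }
  exists (l2 - l1). intros e he. destruct (H1 (e/2)) as [N1 HN1]. lra. destruct (H2 (e/2)) as [N2 HN2]. lra.
  exists (max N1 N2). intros n hn. specialize (HN1 n ltac:(lia)). specialize (HN2 n ltac:(lia)).
  unfold Rdist in *.
  replace (sum_f_R0 u n) with (sum_f_R0 (fun n => u n + Rabs (u n)) n - sum_f_R0 (fun n => Rabs (u n)) n).
  2:{ rewrite <- minus_sum. apply sum_eq. intros; ring. }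
  replace (sum_f_R0 (fun n0 : nat => u n0 + Rabs (u n0)) n - sum_f_R0 (fun n0 : nat => Rabs (u n0)) n - (l2 - l1))
    with ((sum_f_R0 (fun n0 : nat => u n0 + Rabs (u n0)) n - l2) - (sum_f_R0 (fun n0 : nat => Rabs (u n0)) n - l1)) by ring.
  set (X := sum_f_R0 (fun n0 : nat => u n0 + Rabs (u n0)) n - l2) in *.
  set (Y := sum_f_R0 (fun n0 : nat => Rabs (u n0)) n - l1) in *.
  pose proof (Rabs_triang X (-Y)) as T. rewrite Rabs_Ropp in T. replace (X - Y) with (X + - Y) by ring. lra.
Qed.

Lemma ser_tail (u a : nat -> R) (U A : R) N :
  (forall n, Rabs (u n) <= a n) -> infinite_sum a A -> infinite_sum u U ->
  Rabs (U - sum_f_R0 u N) <= A - sum_f_R0 a N.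
Proof. intros H HA HU. apply (sum_maj1 (fun n _ => u n) a 0); auto. Qed.

Lemma ser_abs (u a : nat -> R) (U A : R) :
  (forall n, Rabs (u n) <= a n) -> infinite_sum a A -> infinite_sum u U -> Rabs U <= A.
Proof. intros H HA HU. apply (sum_cv_maj a (fun n _ => u n) 0); auto. Qed.

Lemma ser_part_le (a : nat -> R) A N : (forall n, 0 <= a n) -> infinite_sum a A -> sum_f_R0 a N <= A.
Proof. intros H HA. apply sum_incr; auto. Qed.

Lemma ser_ge0 (a : nat -> R) A : (forall n, 0 <= a n) -> infinite_sum a A -> 0 <= A.
Proof. intros H HA. pose proof (ser_part_le a A 0 H HA). simpl in H0. pose proof (H 0%nat). lra. Qed.

Lemma ser_mono (a : nat -> R) B : (forall n, 0 <= a n) -> (forall N, sum_f_R0 a N <= B) ->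
  exists A, infinite_sum a A /\ A <= B.
Proof.
  intros H HB. destruct (growing_cv (fun N => sum_f_R0 a N)) as [l Hl].
  - intro n. simpl. pose proof (H (S n)). lra.
  - exists B. intros x [n ->]. apply HB.
  - exists l. split. exact Hl. apply Rle_cv_lim with (fun N => sum_f_R0 a N) (fun _ => B); auto.
    intros e he; exists 0%nat; intros; unfold Rdist; rewrite Rminus_diag, Rabs_R0; lra.
Qed.

Lemma ser_le (a b : nat -> R) A B : (forall n, a n <= b n) -> infinite_sum a A -> infinite_sum b B -> A <= B.
Proof. intros H HA HB. apply Rle_cv_lim with (fun N => sum_f_R0 a N) (fun N => sum_f_R0 b N); auto.
  intro n. apply sum_Rle. auto. Qed.

Lemma ser_comp (a b : nat -> R) B : (forall n, 0 <= a n <= b n) -> infinite_sum b B ->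
  exists A, infinite_sum a A /\ A <= B.
Proof.
  intros H HB. apply ser_mono. intro n; apply H. intro N.
  apply Rle_trans with (sum_f_R0 b N). apply sum_Rle. intros; apply H. apply ser_part_le; auto.
  intro n; pose proof (H n); lra.
Qed.

Lemma ser_unique (a : nat -> R) A B : infinite_sum a A -> infinite_sum a B -> A = B.
Proof. intros. eapply UL_sequence; eauto. Qed.

Lemma Un_cv_ext (u v : nat -> R) l : (forall n, u n = v n) -> Un_cv u l -> Un_cv v l.
Proof. intros H Hu e he. destruct (Hu e he) as [N HN]. exists N. intros. rewrite <- H. auto. Qed.

Lemma Un_cv_ext_ev (u v : nat -> R) l N0 : (forall n, (n >= N0)%nat -> u n = v n) -> Un_cv u l -> Un_cv v l.
Proof. intros H Hu e he. destruct (Hu e he) as [N HN]. exists (max N N0). intros. rewrite <- H by lia. apply HN; lia. Qed.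

Lemma Un_cv_const c : Un_cv (fun _ => c) c.
Proof. intros e he; exists 0%nat; intros; unfold Rdist; rewrite Rminus_diag, Rabs_R0; lra. Qed.

Lemma Un_cv_squeeze0 (u v : nat -> R) : (forall n, 0 <= u n <= v n) -> Un_cv v 0 -> Un_cv u 0.
Proof.
  intros H Hv e he. destruct (Hv e he) as [N HN]. exists N. intros n hn. specialize (HN n hn).
  unfold Rdist in *. rewrite Rminus_0_r in *. pose proof (H n). rewrite Rabs_right in * by lra. lra.
Qed.

Lemma tail_cv0 (a : nat -> R) A : infinite_sum a A -> Un_cv (fun n => A - sum_f_R0 a n) 0.
Proof. intros H e he. destruct (H e he) as [N HN]. exists N. intros n hn. specialize (HN n hn).
  unfold Rdist in *. rewrite Rminus_0_r. rewrite Rabs_minus_sym. exact HN. Qed.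

Lemma sum_ind_le (f : nat -> R) K P : (K <= P)%nat ->
  sum_f_R0 (fun k => if (k <=? K)%nat then f k else 0) P = sum_f_R0 f K.
Proof.
  intro H. induction H.
  - apply sum_eq. intros i hi. destruct (Nat.leb_spec i K); [reflexivity| lia].
  - rewrite tech5, IHle. destruct (Nat.leb_spec (S m) K); [lia|ring].
Qed.

Lemma sum_reindex (a : nat -> nat -> R) P :
  sum_f_R0 (fun p => sum_f_R0 (fun k => a k (p - k)%nat) p) P =
  sum_f_R0 (fun k => sum_f_R0 (a k) (P - k)) P.
Proof.
  induction P.
  - simpl. reflexivity.
  - rewrite (tech5 (fun p => sum_f_R0 (fun k => a k (p - k)%nat) p)), IHP.
    rewrite (tech5 (fun k => sum_f_R0 (a k) (S P - k))). rewrite Nat.sub_diag.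
    rewrite (tech5 (fun k => a k (S P - k)%nat)). rewrite Nat.sub_diag.
    replace (sum_f_R0 (fun k => sum_f_R0 (a k) (S P - k)) P)
      with (sum_f_R0 (fun k => sum_f_R0 (a k) (P - k) + a k (S P - k)%nat) P).
    2:{ apply sum_eq. intros i hi. replace (S P - i)%nat with (S (P - i)) by lia. rewrite tech5. reflexivity. }
    rewrite plus_sum. simpl (sum_f_R0 (a (S P)) 0). ring.
Qed.

Lemma finite_max (P : nat -> nat -> Prop) K :
  (forall k, (k <= K)%nat -> exists N, forall n, (n >= N)%nat -> P k n) ->
  exists M, forall k, (k <= K)%nat -> forall n, (n >= M)%nat -> P k n.
Proof.
  induction K; intros H.
  - destruct (H 0%nat (le_n _)) as [N HN]. exists N. intros k hk n hn. replace k with 0%nat by lia. auto.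
  - destruct IHK as [M HM]. intros; apply H; lia. destruct (H (S K) (le_n _)) as [N HN].
    exists (max M N). intros k hk n hn. destruct (Nat.eq_dec k (S K)). subst; apply HN; lia. apply HM; lia.
Qed.

Lemma sum_const_R (c : R) K : sum_f_R0 (fun _ => c) K = INR (S K) * c.
Proof. induction K. simpl; ring. rewrite tech5, IHK. rewrite (S_INR (S K)). ring. Qed.

Lemma diag_real (a w : nat -> nat -> R) (W Sv : nat -> R) (Wt : R) :
  (forall k n, Rabs (a k n) <= w k n) -> (forall k, infinite_sum (w k) (W k)) -> infinite_sum W Wt ->
  (forall k, infinite_sum (a k) (Sv k)) ->
  exists St, infinite_sum Sv St /\ infinite_sum (fun p => sum_f_R0 (fun k => a k (p - k)%nat) p) St.
Proof.
  intros Haw Hw HW Ha.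
  assert (Hw0 : forall k n, 0 <= w k n) by (intros k n; pose proof (Haw k n); pose proof (Rabs_pos (a k n)); lra).
  assert (HW0 : forall k, 0 <= W k) by (intro k; apply (ser_ge0 (w k)); auto).
  assert (HSW : forall k, Rabs (Sv k) <= W k) by (intro k; apply (ser_abs (a k) (w k)); auto).
  destruct (ser_ex Sv W Wt HSW HW) as [St HSt]. exists St. split. exact HSt.
  set (q := fun k N => W k - sum_f_R0 (w k) N).
  assert (Hq0 : forall k N, 0 <= q k N) by (intros; unfold q; pose proof (ser_part_le (w k) (W k) N (Hw0 k) (Hw k)); lra).
  assert (HqW : forall k N, q k N <= W k) by (intros; unfold q; pose proof (sum_f_R0_triangle (w k) N);
     assert (0 <= sum_f_R0 (w k) N) by (apply cond_pos_sum; auto); lra).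
  assert (Hdiff : forall P, Rabs (sum_f_R0 Sv P - sum_f_R0 (fun p => sum_f_R0 (fun k => a k (p - k)%nat) p) P)
                    <= sum_f_R0 (fun k => q k (P - k)%nat) P).
  { intro P. rewrite sum_reindex. rewrite <- minus_sum.
    eapply Rle_trans. apply sum_f_R0_triangle. apply sum_Rle. intros k hk.
    unfold q. apply (ser_tail (a k) (w k)); auto. }
  assert (HQ : Un_cv (fun P => sum_f_R0 (fun k => q k (P - k)%nat) P) 0).
  { intros e he.
    destruct (tail_cv0 W Wt HW (e/2)) as [K HK]. lra.
    specialize (HK K (le_n _)). unfold Rdist in HK. rewrite Rminus_0_r in HK.
    set (d := e / (2 * (INR K + 1))).
    assert (hd : 0 < d). { unfold d. apply Rdiv_lt_0_compat. lra. pose proof (pos_INR K). lra. }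
    destruct (finite_max (fun k n => q k n < d) K) as [M HM].
    { intros k hk. destruct (tail_cv0 (w k) (W k) (Hw k) d hd) as [N HN]. exists N. intros n hn.
      specialize (HN n hn). unfold Rdist in HN. rewrite Rminus_0_r in HN. unfold q. 
      pose proof (Rle_abs (W k - sum_f_R0 (w k) n)). lra. }
    exists (K + M)%nat. intros P hP. unfold Rdist. rewrite Rminus_0_r.
    rewrite Rabs_right by (apply Rle_ge, cond_pos_sum; auto).
    apply Rle_lt_trans with (sum_f_R0 (fun k => (if (k <=? K)%nat then d else 0) + (if (k <=? K)%nat then 0 else W k)) P).
    { apply sum_Rle. intros k hk. destruct (Nat.leb_spec k K).
      - pose proof (HM k H (P - k)%nat ltac:(lia)). lra.
      - pose proof (HqW k (P - k)%nat). lra. }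
    rewrite plus_sum. rewrite sum_ind_le by lia.
    assert (E: sum_f_R0 (fun k => if (k <=? K)%nat then 0 else W k) P = sum_f_R0 W P - sum_f_R0 W K).
    { rewrite <- (sum_ind_le W K P) by lia. rewrite <- minus_sum. apply sum_eq. intros i hi. destruct (i <=? K)%nat; ring. }
    rewrite E. pose proof (ser_part_le W Wt P HW0 HW).
    rewrite sum_const_R.
    assert (INR (S K) * d = e/2) by (unfold d; rewrite S_INR; field; pose proof (pos_INR K); lra).
    pose proof (Rle_abs (Wt - sum_f_R0 W K)). lra. }
  intros e he. destruct (HSt (e/2)) as [N1 HN1]. lra. destruct (HQ (e/2)) as [N2 HN2]. lra.
  exists (max N1 N2). intros n hn. specialize (HN1 n ltac:(lia)). specialize (HN2 n ltac:(lia)).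
  specialize (Hdiff n). unfold Rdist in *. rewrite Rminus_0_r in HN2.
  pose proof (Rle_abs (sum_f_R0 (fun k => q k (n - k)%nat) n)).
  pose proof (Rabs_triang (sum_f_R0 Sv n - St) (sum_f_R0 (fun p => sum_f_R0 (fun k => a k (p - k)%nat) p) n - sum_f_R0 Sv n)).
  rewrite Rabs_minus_sym in Hdiff.
  replace (sum_f_R0 (fun p => sum_f_R0 (fun k => a k (p - k)%nat) p) n - St) with
    ((sum_f_R0 Sv n - St) + (sum_f_R0 (fun p => sum_f_R0 (fun k => a k (p - k)%nat) p) n - sum_f_R0 Sv n)) by ring.
  lra.
Qed.

Lemma vnorm_ge0 s v : 0 <= vnorm s v.
Proof. induction s; simpl. lra. eapply Rle_trans. exact IHs. apply Rmax_l. Qed.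
Lemma vnorm_comp s v i : (i < s)%nat -> Cmod (v i) <= vnorm s v.
Proof.
  induction s; intro H. lia. simpl. destruct (Nat.eq_dec i s). subst. apply Rmax_r.
  eapply Rle_trans. apply IHs; lia. apply Rmax_l.
Qed.
Lemma vnorm_lub s v X : 0 <= X -> (forall i, (i < s)%nat -> Cmod (v i) <= X) -> vnorm s v <= X.
Proof. induction s; intros H0 H; simpl. lra. apply Rmax_lub. apply IHs; auto. apply H; lia. Qed.
Lemma vnorm_ext s u v : (forall i, (i < s)%nat -> u i = v i) -> vnorm s u = vnorm s v.
Proof. induction s; intros H; simpl. reflexivity. rewrite IHs by (intros; apply H; lia). rewrite H by lia. reflexivity. Qed.
Lemma vnorm_scal s a v : vnorm s (fun i => Cmul a (v i)) = Cmod a * vnorm s v.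
Proof. induction s; simpl. ring. rewrite IHs, Cmod_mul. rewrite RmaxRmult by apply Cmod_ge0. reflexivity. Qed.
Lemma vnorm_add s u v : vnorm s (fun i => Cadd (u i) (v i)) <= vnorm s u + vnorm s v.
Proof.
  apply vnorm_lub. pose proof (vnorm_ge0 s u); pose proof (vnorm_ge0 s v); lra.
  intros i hi. eapply Rle_trans. apply Cmod_add. pose proof (vnorm_comp s u i hi); pose proof (vnorm_comp s v i hi); lra.
Qed.
Lemma vnorm_zero s : vnorm s (fun _ => C0) = 0.
Proof. apply Rle_antisym. apply vnorm_lub. lra. intros; rewrite Cmod_C0; lra. apply vnorm_ge0. Qed.
Lemma vnorm_one v : vnorm 1 v = Cmod (v 0%nat).
Proof. simpl. apply Rmax_right. apply Cmod_ge0. Qed.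

Lemma fst_Csum u n : fst (Csum u n) = sum_f_R0 (fun k => fst (u k)) n.
Proof. induction n; simpl; auto. rewrite IHn. reflexivity. Qed.
Lemma snd_Csum u n : snd (Csum u n) = sum_f_R0 (fun k => snd (u k)) n.
Proof. induction n; simpl; auto. rewrite IHn. reflexivity. Qed.

Definition Cser (u : nat -> C) (L : C) : Prop := Ccv (fun n => Csum u n) L.

Lemma Cser_iff u L : Cser u L <-> infinite_sum (fun k => fst (u k)) (fst L) /\ infinite_sum (fun k => snd (u k)) (snd L).
Proof.
  unfold Cser, Ccv, infinite_sum. split; intros [H1 H2]; split.
  - intros e he; destruct (H1 e he) as [N HN]; exists N; intros; rewrite <- fst_Csum; auto.
  - intros e he; destruct (H2 e he) as [N HN]; exists N; intros; rewrite <- snd_Csum; auto.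
  - intros e he; destruct (H1 e he) as [N HN]; exists N; intros; rewrite fst_Csum; auto.
  - intros e he; destruct (H2 e he) as [N HN]; exists N; intros; rewrite snd_Csum; auto.
Qed.

Lemma Ccv_unique u L1 L2 : Ccv u L1 -> Ccv u L2 -> L1 = L2.
Proof. intros [a b] [c d]. apply Ceq; eapply UL_sequence; eauto. Qed.

Lemma Ccv_ext_ev u v L N0 : (forall n, (n >= N0)%nat -> u n = v n) -> Ccv u L -> Ccv v L.
Proof. intros H [a b]. split; [apply Un_cv_ext_ev with (fun n => fst (u n)) N0 | apply Un_cv_ext_ev with (fun n => snd (u n)) N0]; auto; intros; rewrite H; auto. Qed.
Lemma Ccv_ext u v L : (forall n, u n = v n) -> Ccv u L -> Ccv v L.
Proof. intros H. apply Ccv_ext_ev with 0%nat. auto. Qed.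
Lemma Ccv_const c : Ccv (fun _ => c) c.
Proof. split; apply Un_cv_const. Qed.
Lemma Ccv_add u v L M : Ccv u L -> Ccv v M -> Ccv (fun n => Cadd (u n) (v n)) (Cadd L M).
Proof. intros [a b] [c d]. split; simpl; apply CV_plus; auto. Qed.
Lemma Ccv_opp u L : Ccv u L -> Ccv (fun n => Copp (u n)) (Copp L).
Proof. intros [a b]. split; simpl; apply CV_opp; auto. Qed.
Lemma Ccv_sub u v L M : Ccv u L -> Ccv v M -> Ccv (fun n => Csub (u n) (v n)) (Csub L M).
Proof. intros. apply Ccv_add; auto. apply Ccv_opp; auto. Qed.
Lemma Ccv_mul u v L M : Ccv u L -> Ccv v M -> Ccv (fun n => Cmul (u n) (v n)) (Cmul L M).
Proof. intros [a b] [c d]. split; simpl; [apply CV_minus|apply CV_plus]; apply CV_mult; auto. Qed.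
Lemma Ccv_scal c u L : Ccv u L -> Ccv (fun n => Cmul c (u n)) (Cmul c L).
Proof. intros. apply Ccv_mul; auto. apply Ccv_const. Qed.

Lemma Ccv_cmod u L : Ccv u L -> forall e, e > 0 -> exists N, forall n, (n >= N)%nat -> Cmod (Csub (u n) L) < e.
Proof.
  intros [a b] e he. destruct (a (e/2)) as [N1 H1]. lra. destruct (b (e/2)) as [N2 H2]. lra.
  exists (max N1 N2). intros n hn. specialize (H1 n ltac:(lia)). specialize (H2 n ltac:(lia)).
  unfold Rdist in *. eapply Rle_lt_trans. apply Cmod_le_abs. unfold Csub, Cadd, Copp; simpl. unfold Rminus in *. lra.
Qed.
Lemma cmod_Ccv u L : (forall e, e > 0 -> exists N, forall n, (n >= N)%nat -> Cmod (Csub (u n) L) < e) -> Ccv u L.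
Proof.
  intros H. split; intros e he; destruct (H e he) as [N HN]; exists N; intros n hn; specialize (HN n hn); unfold Rdist.
  - pose proof (Cmod_fst (Csub (u n) L)). replace (fst (u n) - fst L) with (fst (Csub (u n) L)) by (unfold Csub, Cadd, Copp; simpl; ring). lra.
  - pose proof (Cmod_snd (Csub (u n) L)). replace (snd (u n) - snd L) with (snd (Csub (u n) L)) by (unfold Csub, Cadd, Copp; simpl; ring). lra.
Qed.

Lemma Ccv_bound_ev u L X N0 : Ccv u L -> (forall n, (n >= N0)%nat -> Cmod (u n) <= X) -> Cmod L <= X.
Proof.
  intros Hu H. destruct (Rle_lt_dec (Cmod L) X) as [h|h]; auto.
  destruct (Ccv_cmod u L Hu (Cmod L - X)) as [N HN]. lra.
  specialize (HN (max N N0) ltac:(lia)). specialize (H (max N N0) ltac:(lia)).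
  assert (L = Cadd (Csub L (u (max N N0))) (u (max N N0))) by ring.
  pose proof (Cmod_add (Csub L (u (max N N0))) (u (max N N0))). rewrite <- H0 in H1.
  rewrite Cmod_sub_sym in HN. lra.
Qed.
Lemma Ccv_bound u L X : Ccv u L -> (forall n, Cmod (u n) <= X) -> Cmod L <= X.
Proof. intros. apply Ccv_bound_ev with u 0%nat; auto. Qed.

Lemma Csum_ext u v n : (forall k, (k <= n)%nat -> u k = v k) -> Csum u n = Csum v n.
Proof. induction n; intros H; simpl. apply H; lia. rewrite IHn, H; auto. Qed.
Lemma Csum_add u v n : Csum (fun k => Cadd (u k) (v k)) n = Cadd (Csum u n) (Csum v n).
Proof. induction n; simpl; auto. rewrite IHn; ring. Qed.
Lemma Csum_scal c u n : Csum (fun k => Cmul c (u k)) n = Cmul c (Csum u n).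
Proof. induction n; simpl; auto. rewrite IHn; ring. Qed.
Lemma Csum_zero n : Csum (fun _ => C0) n = C0.
Proof. induction n; simpl; auto. rewrite IHn; ring. Qed.
Lemma Cmod_Csum u n : Cmod (Csum u n) <= sum_f_R0 (fun k => Cmod (u k)) n.
Proof. induction n; simpl. lra. eapply Rle_trans. apply Cmod_add. lra. Qed.

Lemma Cser_add u v L M : Cser u L -> Cser v M -> Cser (fun k => Cadd (u k) (v k)) (Cadd L M).
Proof. unfold Cser; intros. eapply Ccv_ext. intro n; symmetry; apply Csum_add. apply Ccv_add; auto. Qed.
Lemma Cser_scal c u L : Cser u L -> Cser (fun k => Cmul c (u k)) (Cmul c L).
Proof. unfold Cser; intros. eapply Ccv_ext. intro n; symmetry; apply Csum_scal. apply Ccv_scal; auto. Qed.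

Lemma Cser_ex (u : nat -> C) (a : nat -> R) A :
  (forall n, Cmod (u n) <= a n) -> infinite_sum a A -> exists U, Cser u U /\ Cmod U <= A.
Proof.
  intros H HA.
  destruct (ser_ex (fun k => fst (u k)) a A) as [U1 H1]; auto.
  { intro n; eapply Rle_trans. apply Cmod_fst. auto. }
  destruct (ser_ex (fun k => snd (u k)) a A) as [U2 H2]; auto.
  { intro n; eapply Rle_trans. apply Cmod_snd. auto. }
  exists (U1, U2). assert (Cser u (U1, U2)) by (apply Cser_iff; simpl; auto). split; auto.
  apply Ccv_bound with (fun n => Csum u n); auto. intro n. eapply Rle_trans. apply Cmod_Csum.
  apply Rle_trans with (sum_f_R0 a n). apply sum_Rle; auto. apply ser_part_le; auto.
  intro k. pose proof (H k). pose proof (Cmod_ge0 (u k)). lra.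
Qed.

Lemma Cser_tail (u : nat -> C) (a : nat -> R) A U N :
  (forall n, Cmod (u n) <= a n) -> infinite_sum a A -> Cser u U -> Cmod (Csub U (Csum u N)) <= 2 * (A - sum_f_R0 a N).
Proof.
  intros H HA HU. apply Cser_iff in HU as [H1 H2].
  pose proof (ser_tail (fun k => fst (u k)) a (fst U) A N ltac:(intro n; eapply Rle_trans; [apply Cmod_fst|auto]) HA H1).
  pose proof (ser_tail (fun k => snd (u k)) a (snd U) A N ltac:(intro n; eapply Rle_trans; [apply Cmod_snd|auto]) HA H2).
  eapply Rle_trans. apply Cmod_le_abs. unfold Csub, Cadd, Copp; simpl. rewrite fst_Csum, snd_Csum. unfold Rminus in *. lra.
Qed.

Lemma Cser_unique u L M : Cser u L -> Cser u M -> L = M.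
Proof. apply Ccv_unique. Qed.

Lemma diag_C (a : nat -> nat -> C) (w : nat -> nat -> R) (W : nat -> R) (Wt : R) (Sv : nat -> C) :
  (forall k n, Cmod (a k n) <= w k n) -> (forall k, infinite_sum (w k) (W k)) -> infinite_sum W Wt ->
  (forall k, Cser (a k) (Sv k)) ->
  exists St, Cser Sv St /\ Cser (fun p => Csum (fun k => a k (p - k)%nat) p) St.
Proof.
  intros Haw Hw HW Ha.
  destruct (diag_real (fun k n => fst (a k n)) w W (fun k => fst (Sv k)) Wt) as [S1 [H1 H1']]; auto.
  { intros; eapply Rle_trans; [apply Cmod_fst|auto]. }
  { intro k. destruct (proj1 (Cser_iff _ _) (Ha k)) as [h _]. exact h. }
  destruct (diag_real (fun k n => snd (a k n)) w W (fun k => snd (Sv k)) Wt) as [S2 [H2 H2']]; auto.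
  { intros; eapply Rle_trans; [apply Cmod_snd|auto]. }
  { intro k. destruct (proj1 (Cser_iff _ _) (Ha k)) as [_ h]. exact h. }
  exists (S1, S2). split; apply Cser_iff; simpl; split; auto.
  - eapply Un_cv_ext. 2: exact H1'. intro n. apply sum_eq. intros. simpl. rewrite fst_Csum. reflexivity.
  - eapply Un_cv_ext. 2: exact H2'. intro n. apply sum_eq. intros. simpl. rewrite snd_Csum. reflexivity.
Qed.

Definition lsum (b : list nat) : nat := fold_right plus 0%nat b.

Lemma NoDup_map_cons (j : nat) (L : list (list nat)) : NoDup L -> NoDup (map (cons j) L).
Proof.
  intro H. apply NoDup_map_NoDup_ForallPairs; auto. intros x y _ _ E. injection E; auto.
Qed.

Lemma NoDup_fm (L : nat -> list (list nat)) a n :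
  (forall j, NoDup (L j)) -> NoDup (flat_map (fun j => map (cons j) (L j)) (seq a n)).
Proof.
  revert a. induction n; intros a H; simpl. constructor.
  apply NoDup_app. apply NoDup_map_cons, H. apply IHn, H.
  intros x hx hx'. apply in_map_iff in hx as [y [<- _]].
  apply in_flat_map in hx' as [j [hj hj']]. apply in_seq in hj. apply in_map_iff in hj' as [y' [E _]].
  injection E; intros; lia.
Qed.

Lemma mi_spec r k a : In a (mi r k) <-> length a = r /\ lsum a = k.
Proof.
  revert k a. induction r; intros k a.
  - simpl. destruct k; simpl; split.
    + intros [<-|[]]; auto.
    + intros [h1 h2]. destruct a; [left; auto| simpl in h1; lia].
    + intros [].
    + intros [h1 h2]. destruct a; simpl in *; lia.
  - cbn [mi]. rewrite in_flat_map. split.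
    + intros [j [hj ha]]. apply in_seq in hj. apply in_map_iff in ha as [b [<- hb]].
      apply IHr in hb as [h1 h2]. simpl. split; [lia|]. lia.
    + intros [h1 h2]. destruct a as [|j b]; simpl in h1. lia.
      exists j. split. apply in_seq. simpl in h2. lia.
      apply in_map. apply IHr. simpl in h2. split; lia.
Qed.

Lemma mi_NoDup r k : NoDup (mi r k).
Proof.
  revert k. induction r; intro k. simpl. destruct k; repeat constructor; auto.
  cbn [mi]. apply NoDup_fm. auto.
Qed.

Fixpoint allseq (n k : nat) : list (list nat) :=
  match n with O => [ [] ] | S n => flat_map (fun j => map (cons j) (allseq n k)) (seq 0 k) end.

Lemma allseq_spec n k t : In t (allseq n k) <-> length t = n /\ (forall x, In x t -> (x < k)%nat).
Proof.
  revert t. induction n; intros t.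
  - simpl. split. intros [<-|[]]. split; auto. intros x []. intros [h _]. destruct t; [auto|simpl in h; lia].
  - cbn [allseq]. rewrite in_flat_map. split.
    + intros [j [hj ht]]. apply in_seq in hj. apply in_map_iff in ht as [b [<- hb]].
      apply IHn in hb as [h1 h2]. simpl. split. lia. intros x [<-|hx]. lia. auto.
    + intros [h1 h2]. destruct t as [|j b]; simpl in h1. lia. exists j. split. apply in_seq.
      specialize (h2 j (or_introl eq_refl)). lia. apply in_map. apply IHn. split. lia.
      intros; apply h2; right; auto.
Qed.

Lemma allseq_NoDup n k : NoDup (allseq n k).
Proof. induction n. simpl. repeat constructor; auto. cbn [allseq]. apply NoDup_fm. auto. Qed.

Lemma mono_from_bound (i : nat) z (a : list nat) rho :
  0 <= rho -> (forall j, (j < length a)%nat -> Cmod (z (i + j)%nat) <= rho) ->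
  Cmod (mono_from i z a) <= rho ^ lsum a.
Proof.
  revert i. induction a as [|x a IH]; intros i h0 H; simpl. rewrite Cmod_C1; lra.
  rewrite Cmod_mul, Cmod_pow, pow_add. apply Rmult_le_compat.
  apply pow_le, Cmod_ge0. apply Cmod_ge0. apply pow_incr. split. apply Cmod_ge0.
  replace i with (i + 0)%nat at 1 by lia. apply H. simpl; lia.
  apply IH; auto. intros j hj. replace (S i + j)%nat with (i + S j)%nat by lia. apply H. simpl; lia.
Qed.

Lemma mono_bound r rho z a : 0 <= rho -> polydisc r rho z -> length a = r -> Cmod (mono z a) <= rho ^ lsum a.
Proof. intros h0 hz ha. apply mono_from_bound; auto. intros j hj. apply hz. simpl. lia. Qed.

Lemma mono_from_zero i z r : mono_from i z (repeat 0%nat r) = C1.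
Proof. revert i. induction r; intro i; simpl. reflexivity. rewrite IHr. ring. Qed.

Fixpoint ladd (b c : list nat) : list nat :=
  match b, c with x :: b', y :: c' => (x + y)%nat :: ladd b' c' | _, _ => [] end.

Lemma ladd_length b c : length b = length c -> length (ladd b c) = length b.
Proof. revert c; induction b; intros [|y c]; simpl; intros; auto; try lia. Qed.
Lemma ladd_lsum b c : length b = length c -> lsum (ladd b c) = (lsum b + lsum c)%nat.
Proof. revert c; induction b; intros [|y c]; simpl; intros; auto; try lia. rewrite IHb by lia. lia. Qed.
Lemma mono_from_ladd i z b c : length b = length c ->
  mono_from i z (ladd b c) = Cmul (mono_from i z b) (mono_from i z c).
Proof.
  revert i c; induction b; intros i [|y c]; simpl; intros; try lia. ring.
  rewrite IHb by lia. rewrite Cpow_add. ring.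
Qed.

Lemma mono_from_scale i t z a :
  mono_from i (fun j => Cmul (Cr t) (z j)) a = Cmul (Cr (t ^ lsum a)) (mono_from i z a).
Proof.
  revert i. induction a; intro i; simpl. apply Ceq; unfold Cr, C1, Cmul; simpl; ring.
  rewrite IHa, Cpow_real_mul, pow_add, <- Cr_mul. ring.
Qed.

Lemma mono_from_shift i z a : mono_from (S i) z a = mono_from i (fun j => z (S j)) a.
Proof. revert i; induction a; intro i; simpl; auto. rewrite IHa. reflexivity. Qed.

Lemma lsum_repeat0 r : lsum (repeat 0%nat r) = 0%nat.
Proof. induction r; simpl; auto. Qed.
Lemma mi0 r : mi r 0 = [repeat 0%nat r].
Proof.
  assert (forall a, In a (mi r 0) <-> a = repeat 0%nat r).
  { intro a. rewrite mi_spec. split.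
    - intros [h1 h2]. subst r. induction a; simpl; auto. simpl in h2. f_equal. lia. apply IHa. lia.
    - intros ->. split. apply repeat_length. apply lsum_repeat0. }
  pose proof (mi_NoDup r 0). destruct (mi r 0) as [|x [|y l]].
  - exfalso. apply (proj2 (H (repeat 0%nat r))). reflexivity.
  - f_equal. apply H. left; auto.
  - exfalso. assert (x = y). { rewrite (proj1 (H x) (or_introl eq_refl)). rewrite (proj1 (H y) (or_intror (or_introl eq_refl))). auto. }
    subst. inversion H0. apply H3. left; auto.
Qed.

Definition ldec := list_eq_dec Nat.eq_dec.

Lemma inf_scal (u : nat -> R) U c : infinite_sum u U -> infinite_sum (fun n => c * u n) (c * U).
Proof.
  intros H. unfold infinite_sum in *.
  apply Un_cv_ext with (fun N => c * sum_f_R0 u N). intro n. rewrite scal_sum. apply sum_eq; intros; ring.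
  apply CV_mult. apply Un_cv_const. exact H.
Qed.

Lemma inf_list {A} (L : list A) (u : A -> nat -> R) (U : A -> R) :
  (forall x, In x L -> infinite_sum (u x) (U x)) ->
  infinite_sum (fun n => Rlsum (map (fun x => u x n) L)) (Rlsum (map U L)).
Proof.
  induction L; intros H; cbn [map].
  - unfold Rlsum; simpl. unfold infinite_sum. apply Un_cv_ext with (fun _ => 0). intro n.
    induction n; simpl; [reflexivity| rewrite <- IHn; ring]. apply Un_cv_const.
  - unfold infinite_sum. apply Un_cv_ext with (fun N => sum_f_R0 (u a) N + sum_f_R0 (fun n => Rlsum (map (fun x => u x n) L)) N).
    intro n. rewrite <- plus_sum. reflexivity.
    replace (Rlsum (U a :: map U L)) with (U a + Rlsum (map U L)) by reflexivity.
    apply CV_plus. apply H; left; auto. apply IHL. intros; apply H; right; auto.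
Qed.

Lemma Csum_list {A} (L : list A) (u : A -> nat -> C) N :
  Csum (fun n => Clsum (map (fun x => u x n) L)) N = Clsum (map (fun x => Csum (u x) N) L).
Proof.
  induction L; cbn [map].
  - apply Csum_zero.
  - change (Csum (fun n => Cadd (u a n) (Clsum (map (fun x => u x n) L))) N = Cadd (Csum (u a) N) (Clsum (map (fun x => Csum (u x) N) L))).
    rewrite Csum_add, IHL. reflexivity.
Qed.

Lemma Cser_list {A} (L : list A) (u : A -> nat -> C) (U : A -> C) :
  (forall x, In x L -> Cser (u x) (U x)) ->
  Cser (fun n => Clsum (map (fun x => u x n) L)) (Clsum (map U L)).
Proof.
  induction L; intros H; cbn [map].
  - unfold Cser. eapply Ccv_ext. intro n. symmetry. apply Csum_zero. apply Ccv_const.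
  - unfold Cser. eapply Ccv_ext. intro n. symmetry. apply (Csum_add (u a) (fun n => Clsum (map (fun x => u x n) L))).
    apply Ccv_add. apply H; left; auto. apply IHL. intros; apply H; right; auto.
Qed.

Lemma count_R (x : list nat) (A : list (list nat)) c : NoDup A ->
  Rlsum (map (fun a => if ldec x a then c else 0) A) = if in_dec ldec x A then c else 0.
Proof.
  induction A; intros H. reflexivity. inversion H; subst. unfold Rlsum in *; cbn [map fold_right].
  rewrite IHA by auto. destruct (ldec x a); destruct (in_dec ldec x (a :: A)); destruct (in_dec ldec x A); subst; try tauto; try ring;
  simpl in *; try tauto. destruct i; [congruence| tauto]. 
Qed.
Lemma count_C (x : list nat) (A : list (list nat)) c : NoDup A ->
  Clsum (map (fun a => if ldec x a then c else C0) A) = if in_dec ldec x A then c else C0.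
Proof.
  induction A; intros H. reflexivity. inversion H; subst. cbn [map]. rewrite Clsum_cons.
  rewrite IHA by auto. destruct (ldec x a); destruct (in_dec ldec x (a :: A)); destruct (in_dec ldec x A); subst; try tauto; try ring;
  simpl in *; try tauto. destruct i; [congruence| tauto]. 
Qed.
Lemma swap_R {A B} (F : A -> B -> R) (LA : list A) (LB : list B) :
  Rlsum (map (fun a => Rlsum (map (fun b => F a b) LB)) LA) = Rlsum (map (fun b => Rlsum (map (fun a => F a b) LA)) LB).
Proof.
  induction LA; cbn [map].
  - unfold Rlsum; simpl. induction LB; simpl; [reflexivity| rewrite <- IHLB; ring].
  - unfold Rlsum at 1. cbn [fold_right]. fold (Rlsum (map (fun a0 => Rlsum (map (fun b => F a0 b) LB)) LA)).
    rewrite IHLA. rewrite <- Rlsum_map_add. apply Rlsum_map_ext. intros. reflexivity.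
Qed.
Lemma swap_C {A B} (F : A -> B -> C) (LA : list A) (LB : list B) :
  Clsum (map (fun a => Clsum (map (fun b => F a b) LB)) LA) = Clsum (map (fun b => Clsum (map (fun a => F a b) LA)) LB).
Proof.
  induction LA; cbn [map].
  - rewrite Clsum_map_zero; auto.
  - rewrite Clsum_cons, IHLA. rewrite <- Clsum_map_add. apply Clsum_map_ext. intros. reflexivity.
Qed.

Definition term : Type := (list nat * vec)%type.
Definition tval (z : vec) (i : nat) (L : list term) : C :=
  Clsum (map (fun p => Cmul (mono z (fst p)) (snd p i)) L).
Definition twt (s : nat) (rho : R) (L : list term) : R :=
  Rlsum (map (fun p => vnorm s (snd p) * rho ^ lsum (fst p)) L).
Definition trep (r s : nat) (rho : R) (f : fn) (T : nat -> list term) (W : R) : Prop :=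
  (forall n p, In p (T n) -> length (fst p) = r) /\
  infinite_sum (fun n => twt s rho (T n)) W /\
  (forall z, polydisc r rho z -> forall i, (i < s)%nat -> Cser (fun n => tval z i (T n)) (f z i)).
Definition Arep (r s : nat) (rho : R) (f : fn) (W : R) : Prop :=
  exists T W', trep r s rho f T W' /\ W' <= W.

Lemma twt_ge0 s rho L : 0 <= rho -> 0 <= twt s rho L.
Proof. intro h. apply Rlsum_ge0. intros. apply Rmult_le_pos. apply vnorm_ge0. apply pow_le; auto. Qed.

Lemma tval_bound r s rho z i L : 0 <= rho -> polydisc r rho z -> (i < s)%nat ->
  (forall p, In p L -> length (fst p) = r) -> Cmod (tval z i L) <= twt s rho L.
Proof.
  intros h0 hz hi hL. unfold tval, twt. eapply Rle_trans. apply Cmod_Clsum. apply Rlsum_le.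
  intros p hp. rewrite Cmod_mul. rewrite Rmult_comm. apply Rmult_le_compat. apply Cmod_ge0. apply Cmod_ge0.
  apply vnorm_comp; auto. apply mono_bound with r; auto.
Qed.

Lemma Arep_mono r s rho f W W' : Arep r s rho f W -> W <= W' -> Arep r s rho f W'.
Proof. intros [T [V [h1 h2]]] h. exists T, V. split; auto. lra. Qed.

Lemma Arep_ext r s rho f g W : (forall z, polydisc r rho z -> forall i, (i < s)%nat -> f z i = g z i) ->
  Arep r s rho f W -> Arep r s rho g W.
Proof.
  intros H [T [V [[h1 [h2 h3]] h4]]]. exists T, V. split; auto. split; auto. split; auto.
  intros z hz i hi. rewrite <- H by auto. auto.
Qed.

Definition Clim (u : nat -> C) : C := epsilon (inhabits C0) (fun L => Ccv u L).
Lemma Clim_spec u L : Ccv u L -> Ccv u (Clim u).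
Proof. intro H. unfold Clim. apply epsilon_spec. exists L; auto. Qed.
Definition Rlim (u : nat -> R) : R := epsilon (inhabits 0) (fun L => Un_cv u L).
Lemma Rlim_spec u L : Un_cv u L -> Un_cv u (Rlim u).
Proof. intro H. unfold Rlim. apply epsilon_spec. exists L; auto. Qed.

Definition cf (T : nat -> list term) n (a : list nat) : vec :=
  fun i => Clsum (map (fun p => if ldec (fst p) a then snd p i else C0) (T n)).
Definition cw s (T : nat -> list term) n (a : list nat) : R :=
  Rlsum (map (fun p => if ldec (fst p) a then vnorm s (snd p) else 0) (T n)).
Definition coefT (T : nat -> list term) (a : list nat) : vec :=
  fun i => Clim (fun N => Csum (fun n => cf T n a i) N).
Definition AK r K := flat_map (mi r) (seq 0 (S K)).

Lemma AK_spec r K a : In a (AK r K) <-> length a = r /\ (lsum a <= K)%nat.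
Proof.
  unfold AK. rewrite in_flat_map. split.
  - intros [k [hk ha]]. apply in_seq in hk. apply mi_spec in ha. lia.
  - intros [h1 h2]. exists (lsum a). split. apply in_seq. lia. apply mi_spec. auto.
Qed.

Lemma AK_S r K : AK r (S K) = AK r K ++ mi r (S K).
Proof. unfold AK. rewrite (seq_S (S K)). rewrite flat_map_app. simpl. rewrite app_nil_r. reflexivity. Qed.

Lemma AK_NoDup r K : NoDup (AK r K).
Proof.
  induction K. unfold AK; simpl. rewrite app_nil_r. apply mi_NoDup.
  rewrite AK_S. apply NoDup_app; auto. apply mi_NoDup.
  intros a h1 h2. apply AK_spec in h1. apply mi_spec in h2. lia.
Qed.

Lemma sum_norm_AK r s rho c K :
  sum_f_R0 (norm_term r s rho c) K = Rlsum (map (fun a => vnorm s (c a) * rho ^ lsum a) (AK r K)).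
Proof.
  induction K.
  - unfold AK; simpl. rewrite app_nil_r. unfold norm_term. fold (Rlsum (map (fun alpha => vnorm s (c alpha)) (mi r 0))).
    rewrite Rmult_comm, <- Rlsum_map_mull. apply Rlsum_map_ext. intros a ha. apply mi_spec in ha. rewrite (proj2 ha). ring.
  - rewrite tech5, IHK, AK_S, map_app, Rlsum_app. f_equal.
    unfold norm_term. fold (Rlsum (map (fun alpha => vnorm s (c alpha)) (mi r (S K)))).
    rewrite Rmult_comm, <- Rlsum_map_mull. apply Rlsum_map_ext. intros a ha. apply mi_spec in ha. rewrite (proj2 ha). ring.
Qed.

Lemma Csum_hom_AK r c z i K :
  Csum (fun k => hom_part r c k z i) K = Clsum (map (fun a => Cmul (mono z a) (c a i)) (AK r K)).
Proof.
  induction K.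
  - unfold AK; simpl. rewrite app_nil_r. reflexivity.
  - simpl Csum. rewrite IHK, AK_S, map_app, Clsum_app. reflexivity.
Qed.

Lemma sum_mono_le (a : nat -> R) N N' : (forall n, 0 <= a n) -> (N <= N')%nat -> sum_f_R0 a N <= sum_f_R0 a N'.
Proof. intros H h. induction h. lra. rewrite tech5. pose proof (H (S m)). lra. Qed.

Lemma list_max_lsum (L : list term) : exists M, forall p, In p L -> (lsum (fst p) <= M)%nat.
Proof.
  induction L. exists 0%nat; intros p []. destruct IHL as [M HM]. exists (max M (lsum (fst a))).
  intros p [<-|hp]. lia. specialize (HM p hp). lia.
Qed.

Lemma Csum_sub u v n : Csum (fun k => Csub (u k) (v k)) n = Csub (Csum u n) (Csum v n).
Proof. induction n; simpl; auto. rewrite IHn; ring. Qed.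
Lemma Clsum_map_sub {A} (f g : A -> C) l :
  Clsum (map (fun x => Csub (f x) (g x)) l) = Csub (Clsum (map f l)) (Clsum (map g l)).
Proof. induction l; cbn [map]. unfold Clsum; simpl; ring. rewrite !Clsum_cons, IHl; ring. Qed.

Theorem FB r s rho f T W : 0 < rho -> trep r s rho f T W ->
  exists Nc, Anorm_is r s rho f Nc /\ Nc <= W.
Proof.
  intros hrho [HL [HW HV]].
  set (w := fun p : term => vnorm s (snd p) * rho ^ lsum (fst p)).
  assert (Hw0 : forall p, 0 <= w p) by (intro p; unfold w; apply Rmult_le_pos; [apply vnorm_ge0| apply pow_le; lra]).
  assert (Htw0 : forall n, 0 <= twt s rho (T n)) by (intro; apply twt_ge0; lra).
  assert (Xr : forall n A, NoDup A ->
     Rlsum (map (fun a => cw s T n a * rho ^ lsum a) A) =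
     Rlsum (map (fun p => if in_dec ldec (fst p) A then w p else 0) (T n))).
  { intros n A hA. unfold cw.
    rewrite (Rlsum_map_ext _ (fun a => Rlsum (map (fun p => if ldec (fst p) a then w p else 0) (T n)))).
    rewrite swap_R. apply Rlsum_map_ext. intros p hp. apply count_R; auto.
    intros a ha. rewrite Rmult_comm, <- Rlsum_map_mull. apply Rlsum_map_ext. intros p hp.
    destruct (ldec (fst p) a). subst. unfold w. ring. ring. }
  assert (Xc : forall n A z i, NoDup A ->
     Clsum (map (fun a => Cmul (mono z a) (cf T n a i)) A) =
     Clsum (map (fun p => if in_dec ldec (fst p) A then Cmul (mono z (fst p)) (snd p i) else C0) (T n))).
  { intros n A z i hA. unfold cf.
    rewrite (Clsum_map_ext _ (fun a => Clsum (map (fun p => if ldec (fst p) a then Cmul (mono z (fst p)) (snd p i) else C0) (T n)))).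
    rewrite swap_C. apply Clsum_map_ext. intros p hp. apply count_C; auto.
    intros a ha. rewrite <- Clsum_map_mull. apply Clsum_map_ext. intros p hp.
    destruct (ldec (fst p) a). subst. reflexivity. ring. }
  assert (F1 : forall n a i, (i < s)%nat -> Cmod (cf T n a i) <= cw s T n a).
  { intros n a i hi. unfold cf, cw. eapply Rle_trans. apply Cmod_Clsum. apply Rlsum_le. intros p hp.
    repeat destruct (ldec _ _); try congruence. apply vnorm_comp; auto. rewrite Cmod_C0; lra. }
  assert (F0 : forall n a, 0 <= cw s T n a).
  { intros n a. unfold cw. apply Rlsum_ge0. intros p hp. destruct (ldec (fst p) a). apply vnorm_ge0. lra. }
  assert (F2 : forall n a, cw s T n a * rho ^ lsum a <= twt s rho (T n)).
  { intros n a. unfold cw. rewrite Rmult_comm, <- Rlsum_map_mull. unfold twt. apply Rlsum_le. intros p hp.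
    destruct (ldec (fst p) a). subst. lra. rewrite Rmult_0_r. apply (Hw0 p). }
  set (Ca := fun a => Rlim (fun N => sum_f_R0 (fun n => cw s T n a) N)).
  assert (F3 : forall a, infinite_sum (fun n => cw s T n a) (Ca a)).
  { intro a. assert (hp : 0 < rho ^ lsum a) by (apply pow_lt; lra).
    destruct (ser_comp (fun n => cw s T n a) (fun n => / rho ^ lsum a * twt s rho (T n)) (/ rho ^ lsum a * W)) as [X [HX _]].
    { intro n. split. auto. specialize (F2 n a). apply Rmult_le_reg_l with (rho ^ lsum a); auto.
      rewrite <- Rmult_assoc, Rinv_r, Rmult_1_l by lra. lra. }
    apply inf_scal; auto. unfold Ca. eapply Rlim_spec. exact HX. }
  assert (F4 : forall a i, (i < s)%nat -> Cser (fun n => cf T n a i) (coefT T a i) /\ Cmod (coefT T a i) <= Ca a).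
  { intros a i hi. destruct (Cser_ex (fun n => cf T n a i) (fun n => cw s T n a) (Ca a)) as [U [HU HUb]]; auto.
    assert (Cser (fun n => cf T n a i) (coefT T a i)) by (unfold coefT; eapply Clim_spec; exact HU).
    split; auto. rewrite (Cser_unique _ _ _ H HU). auto. }
  assert (F5 : forall a, vnorm s (coefT T a) <= Ca a).
  { intro a. apply vnorm_lub. apply (ser_ge0 (fun n => cw s T n a)); auto. intros; apply F4; auto. }
  destruct (ser_mono (norm_term r s rho (coefT T)) W) as [Nc [HNc HNcW]].
  { intro k. unfold norm_term. apply Rmult_le_pos. apply Rlsum_ge0. intros; apply vnorm_ge0. apply pow_le; lra. }
  { intro K. rewrite sum_norm_AK.
    apply Rle_trans with (Rlsum (map (fun a => Ca a * rho ^ lsum a) (AK r K))).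
    { apply Rlsum_le. intros a ha. apply Rmult_le_compat_r. apply pow_le; lra. auto. }
    apply ser_le with (fun n => Rlsum (map (fun a => cw s T n a * rho ^ lsum a) (AK r K))) (fun n => twt s rho (T n)); auto.
    - intro n. rewrite Xr by apply AK_NoDup. unfold twt. apply Rlsum_le. intros p hp. fold (w p).
      destruct (in_dec ldec (fst p) (AK r K)). lra. auto.
    - apply inf_list. intros a ha. rewrite (Rmult_comm (Ca a)).
      apply Un_cv_ext with (fun N => sum_f_R0 (fun n => rho ^ lsum a * cw s T n a) N).
      intro N. apply sum_eq. intros; ring. apply inf_scal. auto. }
  exists Nc. split; auto. exists (coefT T). split; auto.
  intros z hz i hi. unfold Cser in HV. specialize (HV z hz i hi).
  apply cmod_Ccv. intros e he.
  destruct (tail_cv0 _ _ HW (e/2)) as [N0 HN0]. lra. specialize (HN0 N0 (le_n _)).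
  unfold Rdist in HN0. rewrite Rminus_0_r, Rabs_right in HN0.
  2:{ apply Rle_ge. pose proof (ser_part_le _ _ N0 Htw0 HW). lra. }
  destruct (finite_max (fun n K => forall p, In p (T n) -> In (fst p) (AK r K)) N0) as [M HM].
  { intros n hn. destruct (list_max_lsum (T n)) as [M HM]. exists M. intros K hK p hp.
    apply AK_spec. split. apply HL with n; auto. specialize (HM p hp). lia. }
  exists M. intros K hK.
  set (E := Clsum (map (fun a => Cmul (mono z a) (coefT T a i)) (AK r K))).
  rewrite Csum_hom_AK. fold E.
  assert (HE : Cser (fun n => Clsum (map (fun p => if in_dec ldec (fst p) (AK r K) then Cmul (mono z (fst p)) (snd p i) else C0) (T n))) E).
  { eapply Ccv_ext. 2: apply (Cser_list (AK r K) (fun a n => Cmul (mono z a) (cf T n a i))).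
    intro n. unfold Csum. apply Csum_ext. intros k hk. apply Xc. apply AK_NoDup.
    intros a ha. apply Cser_scal. apply F4; auto. }
  assert (HD := Ccv_sub _ _ _ _ HV HE).
  set (om := fun n => Rlsum (map (fun p => if in_dec ldec (fst p) (AK r K) then 0 else w p) (T n))).
  assert (Hom : forall N, sum_f_R0 om N <= W - sum_f_R0 (fun n => twt s rho (T n)) N0).
  { intro N.
    apply Rle_trans with (sum_f_R0 (fun n => if (n <=? N0)%nat then 0 else twt s rho (T n)) (max N N0)).
    - apply Rle_trans with (sum_f_R0 om (max N N0)).
      apply sum_mono_le. intro n. unfold om. apply Rlsum_ge0. intros p hp. destruct (in_dec ldec (fst p) (AK r K)). lra. auto. lia.
      apply sum_Rle. intros n hn. unfold om. destruct (Nat.leb_spec n N0).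
      + rewrite (Rlsum_map_ext _ (fun _ => 0)). rewrite Rlsum_const. lra.
        intros p hp. destruct (in_dec ldec (fst p) (AK r K)). auto. exfalso. apply n0. apply (HM n); auto.
      + unfold twt. apply Rlsum_le. intros p hp. fold (w p). destruct (in_dec ldec (fst p) (AK r K)); auto. lra.
    - assert (sum_f_R0 (fun n => if (n <=? N0)%nat then 0 else twt s rho (T n)) (max N N0) =
              sum_f_R0 (fun n => twt s rho (T n)) (max N N0) - sum_f_R0 (fun n => twt s rho (T n)) N0).
      { rewrite <- (sum_ind_le (fun n => twt s rho (T n)) N0 (max N N0)) by lia. rewrite <- minus_sum.
        apply sum_eq. intros k _. destruct (k <=? N0)%nat; ring. }
      rewrite H. pose proof (ser_part_le _ _ (max N N0) Htw0 HW). lra. }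
  assert (Hb : Cmod (Csub (f z i) E) <= W - sum_f_R0 (fun n => twt s rho (T n)) N0).
  { eapply Ccv_bound. exact HD. intro N.
    cbv beta. rewrite <- Csum_sub.
    eapply Rle_trans. apply Cmod_Csum. eapply Rle_trans. 2: apply (Hom N). apply sum_Rle. intros n hn.
    unfold om, tval. rewrite <- Clsum_map_sub. eapply Rle_trans. apply Cmod_Clsum. apply Rlsum_le. intros p hp.
    repeat destruct (in_dec _ _ _); try contradiction.
    - match goal with |- Cmod ?x <= _ => replace x with C0 by ring end. rewrite Cmod_C0; lra.
    - match goal with |- Cmod ?x <= _ => replace x with (Cmul (mono z (fst p)) (snd p i)) by ring end.
      unfold w. rewrite Cmod_mul, Rmult_comm. apply Rmult_le_compat; try apply Cmod_ge0. apply vnorm_comp; auto.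
      apply mono_bound with r; auto. lra. apply HL with n; auto. }
  rewrite Cmod_sub_sym. lra.
Qed.

Lemma Rcv_bound_ev (u : nat -> R) L c X N0 : Un_cv u L -> (forall n, (n >= N0)%nat -> Rabs (u n - c) <= X) -> Rabs (L - c) <= X.
Proof.
  intros Hu H. destruct (Rle_lt_dec (Rabs (L - c)) X) as [h|h]; auto.
  destruct (Hu (Rabs (L - c) - X)) as [N HN]. lra.
  specialize (HN (max N N0) ltac:(lia)). specialize (H (max N N0) ltac:(lia)). unfold Rdist in HN.
  pose proof (Rabs_triang (L - u (max N N0)) (u (max N N0) - c)).
  replace (L - u (max N N0) + (u (max N N0) - c)) with (L - c) in H0 by ring.
  rewrite Rabs_minus_sym in HN. lra.
Qed.

Lemma sum_delta (x : R) n N : (n <= N)%nat -> sum_f_R0 (fun k => if (k =? n)%nat then x else 0) N = x.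
Proof.
  intro h. induction h.
  - destruct n. simpl. reflexivity. rewrite tech5. rewrite Nat.eqb_refl.
    rewrite (sum_eq _ (fun _ => 0)). rewrite sum_const_R. ring. intros i hi. destruct (Nat.eqb_spec i (S n)); [lia|auto].
  - rewrite tech5, IHh. destruct (Nat.eqb_spec (S m) n); [lia|ring].
Qed.

Lemma pow_le1 t m : 0 <= t <= 1 -> t ^ m <= 1.
Proof. intro h. induction m; simpl. lra. nra. Qed.

Lemma PS0 (b M : nat -> R) Mt :
  (forall k, Rabs (b k) <= M k) -> infinite_sum M Mt ->
  (forall t, 0 < t <= 1 -> infinite_sum (fun k => b k * t ^ k) 0) -> forall k, b k = 0.
Proof.
  intros HbM HM Ht.
  assert (HM0 : forall k, 0 <= M k) by (intro k; pose proof (HbM k); pose proof (Rabs_pos (b k)); lra).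
  assert (HMt : 0 <= Mt) by (apply (ser_ge0 M); auto).
  intro n. induction n as [n IH] using (well_founded_induction lt_wf).
  assert (key : forall t, 0 < t <= 1 -> Rabs (b n) <= t * Mt).
  { intros t ht. specialize (Ht t ht).
    assert (Rabs (0 - b n * t ^ n) <= t ^ (S n) * Mt).
    { apply Rcv_bound_ev with (fun N => sum_f_R0 (fun k => b k * t ^ k) N) n; auto.
      intros N hN.
      replace (sum_f_R0 (fun k => b k * t ^ k) N) with
        (sum_f_R0 (fun k => if (k =? n)%nat then 0 else b k * t ^ k) N + sum_f_R0 (fun k => if (k =? n)%nat then b n * t ^ n else 0) N).
      2:{ rewrite <- plus_sum. apply sum_eq. intros i hi. destruct (Nat.eqb_spec i n). subst; ring. ring. }
      rewrite sum_delta by lia. replace (sum_f_R0 (fun k => if (k =? n)%nat then 0 else b k * t ^ k) N + b n * t ^ n - b n * t ^ n)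
        with (sum_f_R0 (fun k => if (k =? n)%nat then 0 else b k * t ^ k) N) by ring.
      eapply Rle_trans. apply sum_f_R0_triangle.
      apply Rle_trans with (sum_f_R0 (fun k => t ^ S n * M k) N).
      - apply sum_Rle. intros k hk. destruct (Nat.eqb_spec k n). rewrite Rabs_R0. apply Rmult_le_pos. apply pow_le; lra. auto.
        destruct (Nat.lt_ge_cases k n).
        + rewrite IH by auto. rewrite Rmult_0_l, Rabs_R0. apply Rmult_le_pos. apply pow_le; lra. auto.
        + rewrite Rabs_mult, (Rabs_right (t ^ k)) by (apply Rle_ge, pow_le; lra). rewrite Rmult_comm.
          apply Rmult_le_compat. apply pow_le; lra. apply Rabs_pos.
          replace k with (S n + (k - S n))%nat by lia. rewrite pow_add.
          pose proof (pow_le t (S n)). assert (t ^ (k - S n) <= 1) by (apply pow_le1; lra).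
          assert (0 <= t ^ (k - S n)) by (apply pow_le; lra). nra. auto.
      - replace (sum_f_R0 (fun k => t ^ S n * M k) N) with (t ^ S n * sum_f_R0 M N) by (rewrite scal_sum; apply sum_eq; intros; ring).
        apply Rmult_le_compat_l. apply pow_le; lra.
        apply ser_part_le; auto. }
    rewrite Rminus_0_l, Rabs_Ropp, Rabs_mult, (Rabs_right (t ^ n)) in H by (apply Rle_ge, pow_le; lra).
    simpl in H. assert (0 < t ^ n) by (apply pow_lt; lra). nra. }
  destruct (Req_dec (b n) 0) as [h|h]; auto. exfalso.
  pose proof (Rabs_pos_lt _ h) as hb.
  set (t := Rmin 1 (Rabs (b n) / (2 * (Mt + 1)))).
  assert (0 < t <= 1). { unfold t. split. apply Rmin_glb_lt. lra. apply Rdiv_lt_0_compat; lra. apply Rmin_l. }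
  specialize (key t H). assert (t <= Rabs (b n) / (2 * (Mt + 1))) by apply Rmin_r.
  assert (t * Mt <= Rabs (b n) / (2 * (Mt + 1)) * Mt) by (apply Rmult_le_compat_r; lra).
  assert (Rabs (b n) / (2 * (Mt + 1)) * Mt < Rabs (b n)).
  { unfold Rdiv. rewrite Rmult_assoc. rewrite <- (Rmult_1_r (Rabs (b n))) at 2. apply Rmult_lt_compat_l. lra.
    apply Rmult_lt_reg_l with (2 * (Mt + 1)). lra. field_simplify; lra. }
  lra.
Qed.

Lemma Csum_seq f k : Csum f k = Clsum (map f (seq 0 (S k))).
Proof.
  induction k. unfold Clsum; simpl; ring. rewrite (seq_S (S k)), map_app, Clsum_app. simpl Csum. rewrite IHk. simpl. unfold Clsum; simpl. ring.
Qed.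

Lemma finite_ser (b : nat -> R) k : (forall j, (j > k)%nat -> b j = 0) -> infinite_sum b (sum_f_R0 b k).
Proof.
  intros H. unfold infinite_sum. apply Un_cv_ext_ev with (fun _ => sum_f_R0 b k) k. 2: apply Un_cv_const.
  intros n hn. induction hn. auto. rewrite tech5, <- IHhn, H by lia. ring.
Qed.

Lemma Cpow_Cr u j : Cpow (Cr u) j = Cr (u ^ j).
Proof. induction j; simpl. reflexivity. rewrite IHj, Cr_mul. reflexivity. Qed.

Lemma poly_zero_part (part : C -> R) (q : nat -> C) k rho : 0 < rho ->
  (forall u x, part (Cmul (Cr u) x) = u * part x) ->
  (forall u, 0 <= u <= rho -> sum_f_R0 (fun j => part (Cmul (Cr (u ^ j)) (q j))) k = 0) ->
  forall j, (j <= k)%nat -> part (q j) = 0.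
Proof.
  intros hrho hsc H.
  set (b := fun j => if (j <=? k)%nat then part (q j) * rho ^ j else 0).
  assert (Hb : forall j, b j = 0).
  { apply (PS0 b (fun j => Rabs (b j)) (sum_f_R0 (fun j => Rabs (b j)) k)).
    - intro; lra.
    - apply finite_ser. intros j hj. unfold b. destruct (Nat.leb_spec j k). lia. apply Rabs_R0.
    - intros t ht. replace 0 with (sum_f_R0 (fun j => b j * t ^ j) k).
      apply finite_ser. intros j hj. unfold b. destruct (Nat.leb_spec j k). lia. ring.
      rewrite <- (H (rho * t)) by nra. apply sum_eq. intros j hj. unfold b. destruct (Nat.leb_spec j k); [|lia].
      rewrite hsc, Rpow_mult_distr. ring. }
  intros j hj. specialize (Hb j). unfold b in Hb. destruct (Nat.leb_spec j k); [|lia].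
  assert (0 < rho ^ j) by (apply pow_lt; lra). nra.
Qed.

Lemma poly_zero (q : nat -> C) k rho : 0 < rho ->
  (forall u, 0 <= u <= rho -> Csum (fun j => Cmul (Cr (u ^ j)) (q j)) k = C0) ->
  forall j, (j <= k)%nat -> q j = C0.
Proof.
  intros hrho H j hj. apply Ceq.
  - apply (poly_zero_part fst q k rho hrho Cr_fst); auto. intros u hu. rewrite <- fst_Csum, H; auto.
  - apply (poly_zero_part snd q k rho hrho Cr_snd); auto. intros u hu. rewrite <- snd_Csum, H; auto.
Qed.

Lemma hom_zero rho : 0 < rho -> forall r k (c : coef) i,
  (forall w, polydisc r rho w -> hom_part r c k w i = C0) -> forall a, In a (mi r k) -> c a i = C0.
Proof.
  intros hrho r. induction r; intros k c i H a ha.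
  - simpl in ha. destruct k; [|destruct ha]. destruct ha as [<-|[]].
    specialize (H (fun _ => C0) ltac:(intros j hj; lia)). unfold hom_part in H. simpl in H.
    rewrite <- H. unfold Clsum; simpl. unfold mono; simpl. ring.
  - cbn [mi] in ha. apply in_flat_map in ha as [j [hj hb]]. apply in_seq in hj.
    apply in_map_iff in hb as [b [<- hb]].
    set (cj := fun j (b : list nat) => c (j :: b)).
    assert (HQ : forall w', polydisc r rho w' -> forall j, (j <= k)%nat -> hom_part r (cj j) (k - j) w' i = C0).
    { intros w' hw'. apply poly_zero with rho; auto. intros u hu.
      set (w := fun m => match m with O => Cr u | S m => w' m end).
      assert (hw : polydisc (S r) rho w).
      { intros m hm. destruct m. unfold w. unfold Cr. rewrite Cmod_real, Rabs_right; lra. apply hw'. lia. }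
      rewrite <- (H w hw). rewrite Csum_seq. unfold hom_part. cbn [mi]. rewrite Clsum_flat_map.
      apply Clsum_map_ext. intros j' hj'. apply in_seq in hj'. rewrite map_map. unfold hom_part.
      rewrite <- Clsum_map_mull. apply Clsum_map_ext. intros b' hb'. unfold mono. simpl.
      rewrite mono_from_shift. unfold cj. rewrite Cpow_Cr. change (mono_from 0 (fun j0 => w (S j0)) b') with (mono_from 0 w' b'). ring. }
    apply (IHr (k - j)%nat (cj j) i); auto.
    intros w' hw'. apply HQ; auto. lia.
Qed.

Lemma norm_term_eq r s rho c k :
  norm_term r s rho c k = Rlsum (map (fun a => vnorm s (c a) * rho ^ k) (mi r k)).
Proof. unfold norm_term. fold (Rlsum (map (fun alpha => vnorm s (c alpha)) (mi r k))).
  rewrite Rmult_comm, <- Rlsum_map_mull. apply Rlsum_map_ext; intros; ring. Qed.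

Lemma norm_term_ge0 r s rho c k : 0 <= rho -> 0 <= norm_term r s rho c k.
Proof. intro h. rewrite norm_term_eq. apply Rlsum_ge0. intros. apply Rmult_le_pos. apply vnorm_ge0. apply pow_le; auto. Qed.

Lemma hom_bound r s rho c k w i : 0 <= rho -> polydisc r rho w -> (i < s)%nat ->
  Cmod (hom_part r c k w i) <= norm_term r s rho c k.
Proof.
  intros h0 hw hi. rewrite norm_term_eq. unfold hom_part. eapply Rle_trans. apply Cmod_Clsum.
  apply Rlsum_le. intros a ha. apply mi_spec in ha. rewrite Cmod_mul, Rmult_comm.
  apply Rmult_le_compat; try apply Cmod_ge0. apply vnorm_comp; auto.
  destruct ha as [h1 h2]. rewrite <- h2. apply mono_bound with r; auto.
Qed.

Lemma hom_scale r c k w i t :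
  hom_part r c k (fun j => Cmul (Cr t) (w j)) i = Cmul (Cr (t ^ k)) (hom_part r c k w i).
Proof.
  unfold hom_part. rewrite <- Clsum_map_mull. apply Clsum_map_ext. intros a ha.
  apply mi_spec in ha. unfold mono. rewrite mono_from_scale. rewrite (proj2 ha). ring.
Qed.

Lemma zero_coef r s rho (c : coef) Nn : 0 < rho -> infinite_sum (norm_term r s rho c) Nn ->
  (forall z, polydisc r rho z -> forall i, (i < s)%nat -> Cser (fun k => hom_part r c k z i) C0) ->
  forall k a i, In a (mi r k) -> (i < s)%nat -> c a i = C0.
Proof.
  intros hrho HN H k a i ha hi. apply (hom_zero rho hrho r k c i); auto.
  intros w hw. clear a ha.
  assert (Hpart : forall part : C -> R, (forall x, Rabs (part x) <= Cmod x) ->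
     (forall u x, part (Cmul (Cr u) x) = u * part x) ->
     (forall t, 0 < t <= 1 -> infinite_sum (fun k => part (Cmul (Cr (t ^ k)) (hom_part r c k w i))) (part C0)) ->
     forall k, part (hom_part r c k w i) = 0).
  { intros part hb hsc hser. apply PS0 with (norm_term r s rho c) Nn; auto.
    - intro k'. eapply Rle_trans. apply hb. apply hom_bound; auto. lra.
    - intros t ht. specialize (hser t ht). 
      assert (part C0 = 0). { pose proof (hsc 0 C0). replace (Cmul (Cr 0) C0) with C0 in H0 by ring. lra. }
      rewrite H0 in hser. eapply Un_cv_ext. 2: exact hser. intro n. apply sum_eq. intros. rewrite hsc. ring. }
  assert (Hz : forall t, 0 < t <= 1 -> Cser (fun k => Cmul (Cr (t ^ k)) (hom_part r c k w i)) C0).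
  { intros t ht. assert (hz : polydisc r rho (fun j => Cmul (Cr t) (w j))).
    { intros j hj. rewrite Cmod_mul. unfold Cr. rewrite Cmod_real, Rabs_right by lra. specialize (hw j hj).
      pose proof (Cmod_ge0 (w j)). nra. }
    specialize (H _ hz i hi). eapply Ccv_ext. 2: exact H. intro n. apply Csum_ext. intros. apply hom_scale. }
  apply Ceq.
  - apply (Hpart fst Cmod_fst Cr_fst). intros t ht. destruct (proj1 (Cser_iff _ _) (Hz t ht)) as [h _]; exact h.
  - apply (Hpart snd Cmod_snd Cr_snd). intros t ht. destruct (proj1 (Cser_iff _ _) (Hz t ht)) as [_ h]; exact h.
Qed.

Lemma Anorm_unique r s rho f N1 N2 : 0 < rho -> Anorm_is r s rho f N1 -> Anorm_is r s rho f N2 -> N1 = N2.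
Proof.
  intros hrho [e1 [R1 S1]] [e2 [R2 S2]].
  set (c := fun a i => Csub (e1 a i) (e2 a i)).
  assert (Hc : forall k a i, In a (mi r k) -> (i < s)%nat -> c a i = C0).
  { destruct (ser_comp (norm_term r s rho c) (fun k => norm_term r s rho e1 k + norm_term r s rho e2 k) (N1 + N2)) as [Nc [HNc _]].
    - intro k. split. apply norm_term_ge0; lra. rewrite !norm_term_eq, <- Rlsum_map_add. apply Rlsum_le. intros a ha.
      rewrite <- Rmult_plus_distr_r. apply Rmult_le_compat_r. apply pow_le; lra.
      unfold c, Csub. eapply Rle_trans. apply vnorm_add. rewrite (vnorm_ext s (fun i => Copp (e2 a i)) (fun i => Cmul (Cr (-1)) (e2 a i))).
      rewrite vnorm_scal. unfold Cr. rewrite Cmod_real. replace (Rabs (-1)) with 1 by (rewrite Rabs_left; lra). lra.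
      intros. apply Ceq; unfold Copp, Cmul, Cr; simpl; ring.
    - unfold infinite_sum. eapply Un_cv_ext. intro n. symmetry. apply plus_sum. apply CV_plus; auto.
    - apply (zero_coef r s rho c Nc); auto. intros z hz i hi.
      replace C0 with (Csub (f z i) (f z i)) by ring.
      eapply Ccv_ext. 2: apply (Ccv_sub _ _ _ _ (R1 z hz i hi) (R2 z hz i hi)).
      intro n. cbv beta. rewrite <- Csum_sub. apply Csum_ext. intros k _. unfold hom_part, c. rewrite <- Clsum_map_sub. apply Clsum_map_ext. intros; ring. }
  assert (E : forall k, norm_term r s rho e1 k = norm_term r s rho e2 k).
  { intro k. rewrite !norm_term_eq. apply Rlsum_map_ext. intros a ha. f_equal. apply vnorm_ext.
    intros i hi. specialize (Hc k a i ha hi). unfold c in Hc.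
    replace (e1 a i) with (Cadd (Csub (e1 a i) (e2 a i)) (e2 a i)) by ring. rewrite Hc. ring. }
  apply ser_unique with (norm_term r s rho e1); auto. eapply Un_cv_ext. 2: exact S2. intro n. apply sum_eq. intros; auto.
Qed.

Lemma Anorm_eq r s rho f N : 0 < rho -> Anorm_is r s rho f N -> Anorm r s rho f = N.
Proof.
  intros h H. unfold Anorm. apply (Anorm_unique r s rho f); auto. apply epsilon_spec. exists N; auto.
Qed.

Lemma BF r s rho f N : Anorm_is r s rho f N -> Arep r s rho f N.
Proof.
  intros [e [R1 S1]]. exists (fun k => map (fun a => (a, e a)) (mi r k)), N. split; [|lra]. split; [|split].
  - intros n p hp. apply in_map_iff in hp as [a [<- ha]]. apply mi_spec in ha. apply ha.
  - eapply Un_cv_ext. 2: exact S1. intro n. apply sum_eq. intros k _. rewrite norm_term_eq. unfold twt. rewrite map_map.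
    apply Rlsum_map_ext. intros a ha. apply mi_spec in ha. simpl. rewrite (proj2 ha). reflexivity.
  - intros z hz i hi. eapply Ccv_ext. 2: exact (R1 z hz i hi). intro n. apply Csum_ext. intros k _.
    unfold tval, hom_part. rewrite map_map. reflexivity.
Qed.

Lemma Arep_inA r s rho f W : 0 < rho -> Arep r s rho f W -> inA r s rho f /\ Anorm r s rho f <= W.
Proof.
  intros h [T [V [HT HV]]]. destruct (FB r s rho f T V h HT) as [Nc [H1 H2]]. split. exists Nc; auto.
  rewrite (Anorm_eq r s rho f Nc) by auto. lra.
Qed.

Lemma inA_Arep r s rho f : 0 < rho -> inA r s rho f -> Arep r s rho f (Anorm r s rho f).
Proof. intros h [N HN]. rewrite (Anorm_eq r s rho f N) by auto. apply BF; auto. Qed.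

Lemma Anorm_ge0 r s rho f : 0 < rho -> inA r s rho f -> 0 <= Anorm r s rho f.
Proof.
  intros h [N HN]. rewrite (Anorm_eq r s rho f N) by auto. destruct HN as [e [_ S1]].
  apply (ser_ge0 (norm_term r s rho e)); auto. intro; apply norm_term_ge0; lra.
Qed.

Lemma Arep_val r s rho f W z i : 0 <= rho -> Arep r s rho f W -> polydisc r rho z -> (i < s)%nat -> Cmod (f z i) <= W.
Proof.
  intros h [T [V [[HL [HW HV]] HVW]]] hz hi. cut (Cmod (f z i) <= V). lra.
  apply Ccv_bound with (fun n => Csum (fun k => tval z i (T k)) n). apply HV; auto.
  intro n. eapply Rle_trans. apply Cmod_Csum. apply Rle_trans with (sum_f_R0 (fun k => twt s rho (T k)) n).
  apply sum_Rle. intros k _. apply tval_bound with r; auto. intros; eapply HL; eauto.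
  apply ser_part_le; auto. intro; apply twt_ge0; auto.
Qed.

Lemma Rlsum_seq f p : Rlsum (map f (seq 0 (S p))) = sum_f_R0 f p.
Proof.
  induction p. unfold Rlsum; simpl; ring. rewrite (seq_S (S p)), map_app, Rlsum_app, IHp. rewrite tech5. unfold Rlsum; simpl; ring.
Qed.

Lemma tval_flat_map {A} z i (g : A -> list term) L : tval z i (flat_map g L) = Clsum (map (fun x => tval z i (g x)) L).
Proof. unfold tval. rewrite Clsum_flat_map. reflexivity. Qed.
Lemma twt_flat_map {A} s rho (g : A -> list term) L : twt s rho (flat_map g L) = Rlsum (map (fun x => twt s rho (g x)) L).
Proof. unfold twt. rewrite Rlsum_flat_map. reflexivity. Qed.
Lemma tval_app z i L1 L2 : tval z i (L1 ++ L2) = Cadd (tval z i L1) (tval z i L2).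
Proof. unfold tval. rewrite map_app, Clsum_app. reflexivity. Qed.
Lemma twt_app s rho L1 L2 : twt s rho (L1 ++ L2) = twt s rho L1 + twt s rho L2.
Proof. unfold twt. rewrite map_app, Rlsum_app. reflexivity. Qed.

Lemma Arep_const r s rho (v : vec) : Arep r s rho (fun _ => v) (vnorm s v).
Proof.
  exists (fun n => match n with O => [(repeat 0%nat r, v)] | S _ => [] end), (vnorm s v). split; [|lra].
  split; [|split].
  - intros [|n] p hp; simpl in hp; [destruct hp as [<-|[]]; apply repeat_length | destruct hp].
  - unfold infinite_sum. apply Un_cv_ext with (fun _ => vnorm s v). 2: apply Un_cv_const.
    intro n. induction n. unfold twt, Rlsum; simpl. rewrite lsum_repeat0. ring.
    rewrite tech5, <- IHn. unfold twt, Rlsum; simpl; ring.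
  - intros z hz i hi. unfold Cser. apply Ccv_ext with (fun _ => v i). 2: apply Ccv_const.
    intro n. induction n. unfold tval; simpl. unfold mono. rewrite mono_from_zero. unfold Clsum; simpl; ring.
    simpl. rewrite <- IHn. unfold tval; simpl. unfold Clsum; simpl; ring.
Qed.

Lemma Arep_add r s rho f g W1 W2 : Arep r s rho f W1 -> Arep r s rho g W2 -> Arep r s rho (fadd f g) (W1 + W2).
Proof.
  intros [T1 [V1 [[L1 [S1 H1]] h1]]] [T2 [V2 [[L2 [S2 H2]] h2]]].
  exists (fun n => T1 n ++ T2 n), (V1 + V2). split; [|lra]. split; [|split].
  - intros n p hp. apply in_app_or in hp as [hp|hp]; eauto.
  - unfold infinite_sum. apply Un_cv_ext with (fun N => sum_f_R0 (fun n => twt s rho (T1 n)) N + sum_f_R0 (fun n => twt s rho (T2 n)) N).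
    intro n. rewrite <- plus_sum. apply sum_eq. intros. rewrite twt_app. reflexivity. apply CV_plus; auto.
  - intros z hz i hi. unfold fadd. eapply Ccv_ext. 2: apply (Cser_add _ _ _ _ (H1 z hz i hi) (H2 z hz i hi)).
    intro n. apply Csum_ext. intros. rewrite tval_app. reflexivity.
Qed.

Lemma Arep_scal r s rho f W a : Arep r s rho f W -> Arep r s rho (fscal a f) (Cmod a * W).
Proof.
  intros [T [V [[L [S H]] h]]].
  exists (fun n => map (fun p => (fst p, fun i => Cmul a (snd p i))) (T n)), (Cmod a * V).
  split. 2: apply Rmult_le_compat_l; auto; apply Cmod_ge0. split; [|split].
  - intros n p hp. apply in_map_iff in hp as [q [<- hq]]. simpl. eauto.
  - unfold infinite_sum. apply Un_cv_ext with (fun N => Cmod a * sum_f_R0 (fun n => twt s rho (T n)) N).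
    intro n. rewrite scal_sum. apply sum_eq. intros. unfold twt. rewrite map_map, Rmult_comm, <- Rlsum_map_mull.
    apply Rlsum_map_ext. intros p _. simpl. rewrite vnorm_scal. rewrite Rmult_assoc; reflexivity.
    apply CV_mult. apply Un_cv_const. auto.
  - intros z hz i hi. unfold fscal. eapply Ccv_ext. 2: apply (Cser_scal a _ _ (H z hz i hi)).
    intro n. apply Csum_ext. intros. unfold tval. rewrite map_map, <- Clsum_map_mull. apply Clsum_map_ext. intros; simpl; ring.
Qed.

Lemma Arep_coord m l rho g W j : 0 <= rho -> (j < l)%nat -> Arep m l rho g W -> Arep m 1 rho (fun z _ => g z j) W.
Proof.
  intros hr hj [T [V [[L [S H]] h]]].
  set (T' := fun n => map (fun p => (fst p, fun _ : nat => snd p j)) (T n)).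
  destruct (ser_comp (fun n => twt 1 rho (T' n)) (fun n => twt l rho (T n)) V) as [V' [HV' HV'V]]; auto.
  { intro n. split. apply twt_ge0; auto. unfold T', twt. rewrite map_map. apply Rlsum_le. intros p _. cbn [fst snd].
    rewrite vnorm_one. apply Rmult_le_compat_r. apply pow_le; auto. apply vnorm_comp; auto. }
  exists T', V'. split; [|lra]. split; [|split]; auto.
  - intros n p hp. unfold T' in hp. apply in_map_iff in hp as [q [<- hq]]. simpl. eauto.
  - intros z hz i hi. eapply Ccv_ext. 2: apply (H z hz j hj). intro n. apply Csum_ext. intros.
    unfold T', tval. rewrite map_map. reflexivity.
Qed.

Definition prodL (L1 L2 : list term) : list term :=
  flat_map (fun p => map (fun q => (ladd (fst p) (fst q), fun i => Cmul (snd p 0%nat) (snd q i))) L2) L1.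

Lemma prodL_len r L1 L2 : (forall p, In p L1 -> length (fst p) = r) -> (forall p, In p L2 -> length (fst p) = r) ->
  forall p, In p (prodL L1 L2) -> length (fst p) = r.
Proof.
  intros h1 h2 p hp. unfold prodL in hp. apply in_flat_map in hp as [a [ha hp]]. apply in_map_iff in hp as [b [<- hb]].
  simpl. rewrite ladd_length; auto. rewrite h1, h2; auto.
Qed.

Lemma twt_prodL r s rho L1 L2 : (forall p, In p L1 -> length (fst p) = r) -> (forall p, In p L2 -> length (fst p) = r) ->
  twt s rho (prodL L1 L2) = twt 1 rho L1 * twt s rho L2.
Proof.
  intros h1 h2. unfold prodL. rewrite twt_flat_map. unfold twt at 2. rewrite Rmult_comm, <- Rlsum_map_mull.
  apply Rlsum_map_ext. intros a ha. unfold twt. rewrite map_map, Rmult_comm, <- Rlsum_map_mull. apply Rlsum_map_ext.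
  intros b hb. cbn [fst snd]. rewrite vnorm_scal, vnorm_one, ladd_lsum, pow_add. unfold vec in *; ring. rewrite h1, h2; auto.
Qed.

Lemma tval_prodL r z i L1 L2 : (forall p, In p L1 -> length (fst p) = r) -> (forall p, In p L2 -> length (fst p) = r) ->
  tval z i (prodL L1 L2) = Cmul (tval z 0 L1) (tval z i L2).
Proof.
  intros h1 h2. unfold prodL. rewrite tval_flat_map.
  transitivity (Clsum (map (fun a => Cmul (tval z i L2) (Cmul (mono z (fst a)) (snd a 0%nat))) L1)).
  - apply Clsum_map_ext; intros a ha.
    transitivity (Cmul (Cmul (mono z (fst a)) (snd a 0%nat)) (tval z i L2)); [|ring].
    unfold tval. rewrite map_map. rewrite <- Clsum_map_mull.
    apply Clsum_map_ext; intros b hb. cbn [fst snd]. unfold mono. rewrite mono_from_ladd by (rewrite h1, h2; auto). unfold vec in *; ring.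
  - rewrite Clsum_map_mull. unfold tval at 2. ring.
Qed.

Lemma trep_V_ge0 r s rho f T V : 0 <= rho -> trep r s rho f T V -> 0 <= V.
Proof. intros h [_ [HS _]]. apply (ser_ge0 (fun n => twt s rho (T n))); auto. intro; apply twt_ge0; auto. Qed.

Lemma inf_scal_r (u : nat -> R) U c : infinite_sum u U -> infinite_sum (fun n => u n * c) (U * c).
Proof. intro H. rewrite Rmult_comm. eapply Un_cv_ext. 2: apply (inf_scal u U c H). intro n. apply sum_eq; intros; ring. Qed.

Lemma Arep_mul m s rho h G W1 W2 : 0 <= rho -> Arep m 1 rho h W1 -> Arep m s rho G W2 ->
  Arep m s rho (fun z i => Cmul (h z 0%nat) (G z i)) (W1 * W2).
Proof.
  intros hr [T1 [V1 [HT1 h1]]] [T2 [V2 [HT2 h2]]].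
  pose proof (trep_V_ge0 _ _ _ _ _ _ hr HT1). pose proof (trep_V_ge0 _ _ _ _ _ _ hr HT2).
  destruct HT1 as [L1 [S1 H1]], HT2 as [L2 [S2 H2]].
  set (T := fun p => flat_map (fun n => prodL (T1 n) (T2 (p - n)%nat)) (seq 0 (S p))).
  exists T, (V1 * V2). split. 2: apply Rmult_le_compat; auto. split; [|split].
  - intros p q hq. unfold T in hq. apply in_flat_map in hq as [n [_ hq]]. apply (prodL_len m (T1 n) (T2 (p - n)%nat)); auto; intros; eauto.
  - assert (E : forall p, twt s rho (T p) = sum_f_R0 (fun n => twt 1 rho (T1 n) * twt s rho (T2 (p - n)%nat)) p).
    { intro p. unfold T. rewrite twt_flat_map, <- Rlsum_seq. apply Rlsum_map_ext. intros n _. apply twt_prodL with m; eauto. }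
    destruct (diag_real (fun k n => twt 1 rho (T1 k) * twt s rho (T2 n)) (fun k n => twt 1 rho (T1 k) * twt s rho (T2 n))
               (fun k => twt 1 rho (T1 k) * V2) (fun k => twt 1 rho (T1 k) * V2) (V1 * V2)) as [St [HSt HD]].
    + intros. rewrite Rabs_right. lra. apply Rle_ge, Rmult_le_pos; apply twt_ge0; auto.
    + intro k. apply inf_scal; auto.
    + apply inf_scal_r; auto.
    + intro k. apply inf_scal; auto.
    + assert (St = V1 * V2) by (eapply ser_unique; [exact HSt| apply inf_scal_r; auto]). subst St.
      eapply Un_cv_ext. 2: exact HD. intro n. apply sum_eq. intros p _. rewrite E. reflexivity.
  - intros z hz i hi.
    assert (E : forall p, tval z i (T p) = Csum (fun n => Cmul (tval z 0 (T1 n)) (tval z i (T2 (p - n)%nat))) p).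
    { intro p. unfold T. rewrite tval_flat_map, Csum_seq. apply Clsum_map_ext. intros n _. apply tval_prodL with m; eauto. }
    destruct (diag_C (fun k n => Cmul (tval z 0 (T1 k)) (tval z i (T2 n))) (fun k n => twt 1 rho (T1 k) * twt s rho (T2 n))
               (fun k => twt 1 rho (T1 k) * V2) (V1 * V2) (fun k => Cmul (tval z 0 (T1 k)) (G z i))) as [St [HSt HD]].
    + intros k n. rewrite Cmod_mul. apply Rmult_le_compat; try apply Cmod_ge0.
      apply tval_bound with m; eauto. apply tval_bound with m; eauto.
    + intro k. apply inf_scal; auto.
    + apply inf_scal_r; auto.
    + intro k. apply Cser_scal. auto.
    + assert (HS2 : Cser (fun k => Cmul (tval z 0 (T1 k)) (G z i)) (Cmul (h z 0%nat) (G z i))).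
      { replace (Cmul (h z 0%nat) (G z i)) with (Cmul (G z i) (h z 0%nat)) by ring.
        eapply Ccv_ext. 2: apply (Cser_scal (G z i) _ _ (H1 z hz 0%nat ltac:(lia))).
        intro n. cbv beta. apply Csum_ext. intros; ring. }
      rewrite (Cser_unique _ _ _ HSt HS2) in HD.
      eapply Ccv_ext. 2: exact HD. intro n. apply Csum_ext. intros p _. rewrite E. reflexivity.
Qed.

Lemma Arep_series r s rho f (H : nat -> fn) (Wk : nat -> R) Wt : 0 <= rho ->
  (forall k, Arep r s rho (H k) (Wk k)) -> infinite_sum Wk Wt ->
  (forall z, polydisc r rho z -> forall i, (i < s)%nat -> Cser (fun k => H k z i) (f z i)) ->
  Arep r s rho f Wt.
Proof.
  intros hr HA HW HV.
  assert (X : forall k, {p : (nat -> list term) * R | trep r s rho (H k) (fst p) (snd p) /\ snd p <= Wk k}).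
  { intro k. apply constructive_indefinite_description. destruct (HA k) as [T [V h]]. exists (T, V). exact h. }
  set (Tk := fun k => fst (proj1_sig (X k))). set (Vk := fun k => snd (proj1_sig (X k))).
  assert (HT : forall k, trep r s rho (H k) (Tk k) (Vk k) /\ Vk k <= Wk k) by (intro k; exact (proj2_sig (X k))).
  assert (HV0 : forall k, 0 <= Vk k) by (intro k; eapply trep_V_ge0; [exact hr| apply HT]).
  destruct (ser_comp Vk Wk Wt) as [Vt [HVt HVtW]]; auto. { intro k; split; auto; apply HT. }
  set (T := fun p => flat_map (fun k => Tk k (p - k)%nat) (seq 0 (S p))).
  exists T, Vt. split; auto. split; [|split].
  - intros p q hq. unfold T in hq. apply in_flat_map in hq as [k [_ hq]]. destruct (HT k) as [[hl _] _]. eauto.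
  - destruct (diag_real (fun k n => twt s rho (Tk k n)) (fun k n => twt s rho (Tk k n)) Vk Vk Vt) as [St [HSt HD]]; auto.
    + intros. rewrite Rabs_right. lra. apply Rle_ge, twt_ge0; auto.
    + intro k. apply HT.
    + intro k. apply HT.
    + rewrite (ser_unique _ _ _ HSt HVt) in HD.
      eapply Un_cv_ext. 2: exact HD. intro n. apply sum_eq. intros p _. unfold T. rewrite twt_flat_map, Rlsum_seq. reflexivity.
  - intros z hz i hi.
    destruct (diag_C (fun k n => tval z i (Tk k n)) (fun k n => twt s rho (Tk k n)) Vk Vt (fun k => H k z i)) as [St [HSt HD]]; auto.
    + intros k n. destruct (HT k) as [[hl _] _]. apply tval_bound with r; eauto.
    + intro k. apply HT.
    + intro k. destruct (HT k) as [[_ [_ h]] _]. apply h; auto.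
    + rewrite (Cser_unique _ _ _ HSt (HV z hz i hi)) in HD.
      eapply Ccv_ext. 2: exact HD. intro n. apply Csum_ext. intros p _. unfold T. rewrite tval_flat_map, Csum_seq. reflexivity.
Qed.

Fixpoint exf (i : nat) (a : list nat) : list nat :=
  match a with [] => [] | x :: t => repeat i x ++ exf (S i) t end.
Fixpoint pl (t : nat) (e : list nat) (x : nat -> fn) (z : vec) : C :=
  match e with [] => C1 | j :: e' => Cmul (x t z j) (pl (S t) e' x z) end.
Definition B0 (l : nat) (eta : coef) (k : nat) (x : nat -> fn) : fn :=
  fun z i => Clsum (map (fun a => Cmul (pl 0 (exf 0 a) x z) (eta a i)) (mi l k)).
Definition Perms (k : nat) : list (list nat) :=
  filter (fun t => if NoDup_dec Nat.eq_dec t then true else false) (allseq k k).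
Definition Bk (l : nat) (eta : coef) (k : nat) (x : nat -> fn) : fn :=
  fun z i => Cmul (Cr (/ INR (length (Perms k))))
    (Clsum (map (fun tau => B0 l eta k (fun t => x (nth t tau 0%nat)) z i) (Perms k))).

Lemma exf_length i a : length (exf i a) = lsum a.
Proof. revert i; induction a; intro i; simpl; auto. rewrite length_app, repeat_length, IHa. reflexivity. Qed.
Lemma exf_lt i a j : In j (exf i a) -> (j < i + length a)%nat.
Proof.
  revert i; induction a; intros i h; simpl in *. destruct h.
  apply in_app_or in h as [h|h]. apply repeat_spec in h. lia. apply IHa in h. lia.
Qed.

Lemma Perms_spec k t : In t (Perms k) <-> (length t = k /\ (forall x, In x t -> (x < k)%nat)) /\ NoDup t.
Proof.
  unfold Perms. rewrite filter_In, allseq_spec. destruct (NoDup_dec Nat.eq_dec t); split; intros [h1 h2]; auto; try discriminate.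
  all: try (split; auto); try contradiction.
Qed.
Lemma Perms_NoDup k : NoDup (Perms k).
Proof. apply NoDup_filter, allseq_NoDup. Qed.
Lemma Perms_id k : In (seq 0 k) (Perms k).
Proof. apply Perms_spec. split. split. apply length_seq. intros x hx. apply in_seq in hx. lia. apply seq_NoDup. Qed.
Lemma Perms_len_pos k : (0 < length (Perms k))%nat.
Proof. pose proof (Perms_id k). destruct (Perms k). destruct H. simpl; lia. Qed.

Fixpoint plc (e : list nat) (y : vec) : C := match e with [] => C1 | j :: e' => Cmul (y j) (plc e' y) end.
Lemma pl_const t e g z : pl t e (fun _ => g) z = plc e (g z).
Proof. revert t; induction e; intro t; simpl; auto. rewrite IHe. reflexivity. Qed.
Lemma plc_app e1 e2 y : plc (e1 ++ e2) y = Cmul (plc e1 y) (plc e2 y).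
Proof. induction e1; simpl. ring. rewrite IHe1. ring. Qed.
Lemma plc_repeat i n y : plc (repeat i n) y = Cpow (y i) n.
Proof. induction n; simpl; auto. rewrite IHn. reflexivity. Qed.
Lemma plc_exf i a y : plc (exf i a) y = mono_from i y a.
Proof. revert i; induction a; intro i; simpl; auto. rewrite plc_app, plc_repeat, IHa. reflexivity. Qed.

Lemma Clsum_const {A} (c : C) (L : list A) : Clsum (map (fun _ => c) L) = Cmul (Cr (INR (length L))) c.
Proof.
  induction L; cbn [map length]. apply Ceq; unfold Cr, Cmul, Clsum; simpl; ring.
  rewrite Clsum_cons, IHL, S_INR. apply Ceq; unfold Cr, Cmul, Cadd; simpl; ring.
Qed.

Lemma Bk_diag l eta k g z i : Bk l eta k (fun _ => g) z i = hom_part l eta k (g z) i.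
Proof.
  unfold Bk. assert (E : forall tau, B0 l eta k (fun t => (fun _ : nat => g) (nth t tau 0%nat)) z i = hom_part l eta k (g z) i).
  { intro tau. unfold B0, hom_part. apply Clsum_map_ext. intros a ha. rewrite pl_const, plc_exf. reflexivity. }
  rewrite (Clsum_map_ext _ (fun _ => hom_part l eta k (g z) i)) by auto. rewrite Clsum_const.
  pose proof (Perms_len_pos k). assert (INR (length (Perms k)) <> 0) by (apply not_0_INR; lia).
  transitivity (Cmul (Cr (/ INR (length (Perms k)) * INR (length (Perms k)))) (hom_part l eta k (g z) i)).
  rewrite <- Cr_mul. ring. rewrite Rinv_l by auto. rewrite Cr_one. ring.
Qed.

Lemma pl_ext t e x x' z : (forall t' j, (t <= t')%nat -> (t' < t + length e)%nat -> In j e -> x t' z j = x' t' z j) ->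
  pl t e x z = pl t e x' z.
Proof.
  revert t; induction e; intros t H; simpl; auto. rewrite H by (simpl; auto; lia). rewrite IHe; auto.
  intros t' j h1 h2 h3. apply H; simpl; auto; lia.
Qed.

Lemma B0_ext l eta k x x' z i : (forall t j, (t < k)%nat -> (j < l)%nat -> x t z j = x' t z j) ->
  B0 l eta k x z i = B0 l eta k x' z i.
Proof.
  intro H. unfold B0. apply Clsum_map_ext. intros a ha. apply mi_spec in ha. f_equal. apply pl_ext.
  intros t' j h1 h2 h3. apply H. rewrite exf_length in h2. lia. apply exf_lt in h3. lia.
Qed.

Lemma Clsum_perm (L1 L2 : list C) : Permutation L1 L2 -> Clsum L1 = Clsum L2.
Proof. induction 1; unfold Clsum in *; simpl; auto. rewrite IHPermutation; auto. ring. congruence. Qed.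

Lemma map_inj_lt (sg : nat -> nat) k l1 l2 : (forall a b, (a < k)%nat -> (b < k)%nat -> sg a = sg b -> a = b) ->
  (forall x, In x l1 -> (x < k)%nat) -> (forall x, In x l2 -> (x < k)%nat) -> map sg l1 = map sg l2 -> l1 = l2.
Proof.
  intros H. revert l2; induction l1; intros [|b l2] h1 h2 E; simpl in E; try discriminate; auto.
  injection E; intros E1 E2. f_equal. apply H; auto. apply h1; left; auto. apply h2; left; auto.
  apply IHl1; auto. intros; apply h1; right; auto. intros; apply h2; right; auto.
Qed.

Lemma Bk_sym l eta k g sg z i : is_perm k sg -> Bk l eta k (fun i => g (sg i)) z i = Bk l eta k g z i.
Proof.
  intros [hs1 hs2]. unfold Bk. f_equal.
  transitivity (Clsum (map (fun tau => B0 l eta k (fun t => g (nth t tau 0%nat)) z i) (map (map sg) (Perms k)))).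
  - rewrite map_map. apply Clsum_map_ext. intros tau htau. apply B0_ext. intros t j ht hj.
    apply Perms_spec in htau as [[hl _] _]. rewrite <- (map_nth sg tau 0%nat t). rewrite (@nth_indep nat (map sg tau) t (sg 0%nat) 0%nat). reflexivity.
    rewrite length_map; lia.
  - apply Clsum_perm. apply Permutation_map. apply NoDup_Permutation_bis.
    + apply NoDup_map_NoDup_ForallPairs. 2: apply Perms_NoDup. intros t1 t2 h1 h2 E.
      apply Perms_spec in h1 as [[_ h1] _]. apply Perms_spec in h2 as [[_ h2] _]. eapply map_inj_lt; eauto.
    + rewrite length_map; lia.
    + intros t ht. apply in_map_iff in ht as [tau [<- htau]]. apply Perms_spec in htau as [[hl he] hn].
      apply Perms_spec. split. split. rewrite length_map; auto. intros x hx. apply in_map_iff in hx as [y [<- hy]]. auto.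
      apply NoDup_map_NoDup_ForallPairs; auto. intros a b ha hb E. apply hs2; auto.
Qed.

Lemma pl_lin t e (x1 x2 x3 : nat -> fn) z a t0 : (t <= t0 < t + length e)%nat ->
  (forall t' j, (t <= t')%nat -> (t' < t + length e)%nat -> t' <> t0 -> x1 t' z j = x2 t' z j /\ x3 t' z j = x2 t' z j) ->
  (forall j, x1 t0 z j = Cadd (Cmul a (x2 t0 z j)) (x3 t0 z j)) ->
  pl t e x1 z = Cadd (Cmul a (pl t e x2 z)) (pl t e x3 z).
Proof.
  revert t; induction e as [|j e IH]; intros t ht H H0; simpl in *. lia.
  destruct (Nat.eq_dec t t0).
  - subst t0. rewrite H0.
    assert (E1 : pl (S t) e x1 z = pl (S t) e x2 z) by (apply pl_ext; intros; apply H; lia).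
    assert (E3 : pl (S t) e x3 z = pl (S t) e x2 z) by (apply pl_ext; intros; apply H; lia).
    rewrite E1, E3. ring.
  - destruct (H t j ltac:(lia) ltac:(lia) n) as [E1 E3]. rewrite E1, E3.
    rewrite (IH (S t)); auto. ring. lia. intros; apply H; lia.
Qed.

Lemma Bk_lin l eta k (g : nat -> fn) j0 (x y : fn) (a : C) z i : (j0 < k)%nat ->
  Bk l eta k (upd g j0 (fadd (fscal a x) y)) z i =
  Cadd (Cmul a (Bk l eta k (upd g j0 x) z i)) (Bk l eta k (upd g j0 y) z i).
Proof.
  intro hj. unfold Bk.
  rewrite (Clsum_map_ext (fun tau => B0 l eta k (fun t => upd g j0 (fadd (fscal a x) y) (nth t tau 0%nat)) z i)
     (fun tau => Cadd (Cmul a (B0 l eta k (fun t => upd g j0 x (nth t tau 0%nat)) z i)) (B0 l eta k (fun t => upd g j0 y (nth t tau 0%nat)) z i))).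
  { rewrite Clsum_map_add, Clsum_map_mull. ring. }
  intros tau htau. apply Perms_spec in htau as [[hl he] hn].
  assert (hin : In j0 tau).
  { apply (@NoDup_length_incl nat tau (seq 0 k) hn). rewrite length_seq; lia. intros u hu. apply in_seq. split. lia. simpl. auto. apply in_seq. lia. }
  destruct (In_nth tau j0 0%nat hin) as [t0 [ht0 Et0]].
  unfold B0. rewrite <- Clsum_map_mull, <- Clsum_map_add. apply Clsum_map_ext. intros al hal. apply mi_spec in hal.
  rewrite (pl_lin 0 (exf 0 al) (fun t => upd g j0 (fadd (fscal a x) y) (nth t tau 0%nat)) (fun t => upd g j0 x (nth t tau 0%nat))
     (fun t => upd g j0 y (nth t tau 0%nat)) z a t0). ring.
  - rewrite exf_length. lia.
  - intros t' jj h1 h2 h3. rewrite exf_length in h2. unfold upd.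
    destruct (Nat.eqb_spec (nth t' tau 0%nat) j0). 2: auto.
    exfalso. apply h3. apply (proj1 (NoDup_nth tau 0%nat) hn); lia.
  - intro jj. unfold upd. rewrite Et0, Nat.eqb_refl. unfold fadd, fscal. reflexivity.
Qed.

Lemma Arep_lsum {A} m d rho (L : list A) (F : A -> fn) (Wf : A -> R) :
  (forall a, In a L -> Arep m d rho (F a) (Wf a)) ->
  Arep m d rho (fun z i => Clsum (map (fun a => F a z i) L)) (Rlsum (map Wf L)).
Proof.
  induction L; intros H; cbn [map].
  - eapply Arep_ext. 2: eapply Arep_mono. 2: apply (Arep_const m d rho (fun _ => C0)). intros; reflexivity.
    rewrite vnorm_zero. unfold Rlsum; simpl; lra.
  - eapply Arep_ext. 2: apply (Arep_add _ _ _ (F a) (fun z i => Clsum (map (fun a => F a z i) L)) (Wf a) (Rlsum (map Wf L))).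
    intros; unfold fadd; reflexivity. apply H; left; auto. apply IHL; intros; apply H; right; auto.
Qed.

Lemma Arep_pl m l d rho (x : nat -> fn) Wg (v : vec) : 0 <= rho -> forall e t,
  (forall j, In j e -> (j < l)%nat) -> (forall t', (t <= t')%nat -> (t' < t + length e)%nat -> Arep m l rho (x t') Wg) ->
  Arep m d rho (fun z i => Cmul (pl t e x z) (v i)) (Wg ^ length e * vnorm d v).
Proof.
  intros hr e. induction e as [|j e IH]; intros t he hx; simpl.
  - eapply Arep_ext. 2: apply Arep_mono with (vnorm d v). 2: apply Arep_const. intros; simpl; ring. lra.
  - match goal with |- Arep _ _ _ _ ?W => replace W with (Wg * (Wg ^ length e * vnorm d v)) by (simpl; ring) end.
    eapply Arep_ext. 2: apply (Arep_mul m d rho (fun z _ => x t z j) (fun z i => Cmul (pl (S t) e x z) (v i))); auto.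
    intros; simpl; ring.
    apply Arep_coord with l; auto. apply he; left; auto. apply hx; simpl; lia.
    apply IH. intros; apply he; right; auto. intros; apply hx; simpl; lia.
Qed.

Lemma Arep_B0 m l d rho eta k (x : nat -> fn) Wg : 0 <= rho -> (forall t, (t < k)%nat -> Arep m l rho (x t) Wg) ->
  Arep m d rho (B0 l eta k x) (Rlsum (map (fun a => vnorm d (eta a)) (mi l k)) * Wg ^ k).
Proof.
  intros hr hx. unfold B0. rewrite Rmult_comm, <- Rlsum_map_mull.
  apply (Arep_lsum m d rho (mi l k) (fun a z i => Cmul (pl 0 (exf 0 a) x z) (eta a i)) (fun a => Wg ^ k * vnorm d (eta a))).
  intros a ha. apply mi_spec in ha as [h1 h2].
  replace k with (length (exf 0 a)) at 1 by (rewrite exf_length; auto).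
  apply Arep_pl with l; auto. intros j hj. apply exf_lt in hj. lia. intros t' _ ht'. apply hx. rewrite exf_length in ht'. lia.
Qed.

Lemma Arep_Bk m l d rho eta k (g : nat -> fn) Wg : 0 <= rho -> (forall t, (t < k)%nat -> Arep m l rho (g t) Wg) ->
  Arep m d rho (Bk l eta k g) (Rlsum (map (fun a => vnorm d (eta a)) (mi l k)) * Wg ^ k).
Proof.
  intros hr hg. set (c := Rlsum (map (fun a => vnorm d (eta a)) (mi l k)) * Wg ^ k).
  pose proof (Perms_len_pos k). assert (hL : 0 < INR (length (Perms k))) by (apply lt_0_INR; lia).
  eapply Arep_ext. 2: eapply Arep_mono. 2: apply (Arep_scal m d rho (fun z i => Clsum (map (fun tau => B0 l eta k (fun t => g (nth t tau 0%nat)) z i) (Perms k)))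
     (Rlsum (map (fun _ => c) (Perms k))) (Cr (/ INR (length (Perms k))))).
  - intros; unfold fscal, Bk; reflexivity.
  - apply Arep_lsum. intros tau htau. apply Arep_B0; auto. intros t ht. apply hg.
    apply Perms_spec in htau as [[hl he] _]. apply he. apply nth_In. lia.
  - rewrite Rlsum_const. unfold Cr. rewrite Cmod_real. rewrite Rabs_right by (apply Rle_ge; left; apply Rinv_0_lt_compat; auto).
    rewrite <- Rmult_assoc, Rinv_l by lra. lra.
Qed.

Lemma Bk_welldef m l d rho eta k (g g' : nat -> fn) : (forall t, (t < k)%nat -> Aeq m l rho (g t) (g' t)) ->
  Aeq m d rho (Bk l eta k g) (Bk l eta k g').
Proof.
  intros H z hz i hi. unfold Bk. f_equal. apply Clsum_map_ext. intros tau htau. apply B0_ext.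
  intros t j ht hj. apply H; auto. apply Perms_spec in htau as [[hl he] _]. apply he. apply nth_In. lia.
Qed.

Lemma fsum_Csum (u : nat -> fn) n z i : fsum u n z i = Csum (fun k => u k z i) n.
Proof. induction n; simpl; auto. unfold fadd. rewrite IHn. reflexivity. Qed.

Lemma Csum_tail (u : nat -> C) n N : (n <= N)%nat ->
  Csum (fun k => if (k <=? n)%nat then C0 else u k) N = Csub (Csum u N) (Csum u n).
Proof.
  intro h. induction h.
  - rewrite (Csum_ext _ (fun _ => C0)). rewrite Csum_zero. ring. intros k hk. destruct (Nat.leb_spec k n); [auto|lia].
  - cbn [Csum]. rewrite IHh. destruct (Nat.leb_spec (S m) n). lia. ring.
Qed.

Lemma inf_tail (a : nat -> R) A n : infinite_sum a A ->
  infinite_sum (fun k => if (k <=? n)%nat then 0 else a k) (A - sum_f_R0 a n).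
Proof.
  intro H. unfold infinite_sum. apply Un_cv_ext_ev with (fun N => sum_f_R0 a N - sum_f_R0 a n) n.
  - intros N hN. rewrite <- (sum_ind_le a n N) by lia. rewrite <- minus_sum. apply sum_eq. intros k _. destruct (k <=? n)%nat; ring.
  - apply CV_minus. auto. apply Un_cv_const.
Qed.

Theorem mainTheorem4 (l d m : nat) (rho delta : R) (f : fn) :
  0 < rho -> 0 < delta -> inA l d rho f ->
  (* C_f is well defined on E(rho) with values in F *)
  (forall g, inA m l delta g -> Anorm m l delta g <= rho ->
     inA m d delta (fun z => f (g z))) /\
  (* C_f in A_rho(E,F) with ||C_f||_{A_rho(E,F)} <= ||f||_rho *)
  exists (b : nat -> (nat -> fn) -> fn) (nb : nat -> R) (S : R),
    (forall k, sym_multilinear m l d delta k (b k) /\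
               opnorm_is m l d delta k (b k) (nb k)) /\
    infinite_sum (fun k => nb k * rho ^ k) S /\
    S <= Anorm l d rho f /\
    (forall g, inA m l delta g -> Anorm m l delta g <= rho ->
       Un_cv (fun n => Anorm m d delta
                 (fsub (fun z => f (g z)) (fsum (fun k => b k (fun _ => g)) n)))
             0).
Proof.
  intros hrho hdel [Nf HNf].
  pose proof (Anorm_eq l d rho f Nf hrho HNf) as EAf.
  destruct HNf as [eta [Hrep Hsum]].
  set (ck := fun k => Rlsum (map (fun a => vnorm d (eta a)) (mi l k))).
  assert (Hck0 : forall k, 0 <= ck k) by (intro k; apply Rlsum_ge0; intros; apply vnorm_ge0).
  assert (Hnt : forall k, norm_term l d rho eta k = ck k * rho ^ k) by reflexivity.
  set (b := fun k => Bk l eta k).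
  assert (Hpt : forall g, inA m l delta g -> Anorm m l delta g <= rho ->
     forall z, polydisc m delta z -> forall i, (i < d)%nat -> Cser (fun k => b k (fun _ => g) z i) (f (g z) i)).
  { intros g hg hgr z hz i hi. assert (hgz : polydisc l rho (g z)).
    { intros j hj. eapply Rle_trans. apply (Arep_val m l delta g (Anorm m l delta g)); auto. lra. apply inA_Arep; auto. auto. }
    eapply Ccv_ext. 2: apply (Hrep _ hgz i hi). intro n. apply Csum_ext. intros k _. unfold b. rewrite Bk_diag. reflexivity. }
  assert (HAB : forall g, inA m l delta g -> Anorm m l delta g <= rho -> forall k, Arep m d delta (b k (fun _ => g)) (ck k * rho ^ k)).
  { intros g hg hgr k. apply Arep_Bk. lra. intros. eapply Arep_mono. apply inA_Arep; auto. auto. }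
  split.
  { intros g hg hgr. apply (Arep_inA m d delta _ Nf hdel).
    apply (Arep_series m d delta _ (fun k => b k (fun _ => g)) (fun k => ck k * rho ^ k)); auto. lra.
    }
  assert (Hbnd : forall k g, (forall i, (i < k)%nat -> inA m l delta (g i) /\ Anorm m l delta (g i) = 1) ->
     Anorm m d delta (b k g) <= ck k).
  { intros k g H. replace (ck k) with (ck k * 1 ^ k) by (rewrite pow1; ring).
    apply (Arep_inA m d delta _ _ hdel). apply Arep_Bk. lra. intros t ht. destruct (H t ht) as [h1 h2].
    rewrite <- h2. apply inA_Arep; auto. }
  assert (X : forall k, {x | opnorm_is m l d delta k (b k) x}).
  { intro k. apply completeness.
    - exists (ck k). intros x [->|[g [hg ->]]]. auto. apply Hbnd; auto.
    - exists 0. left; auto. }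
  set (nb := fun k => proj1_sig (X k)).
  assert (Hnb : forall k, 0 <= nb k <= ck k).
  { intro k. unfold nb. destruct (X k) as [x [h1 h2]]. simpl. split.
    - apply h1. left; auto.
    - apply h2. intros y [->|[g [hg ->]]]. auto. apply Hbnd; auto. }
  destruct (ser_comp (fun k => nb k * rho ^ k) (norm_term l d rho eta) Nf) as [S [HS HSN]]; auto.
  { intro k. rewrite Hnt. pose proof (Hnb k). split. apply Rmult_le_pos. lra. apply pow_le; lra.
    apply Rmult_le_compat_r. apply pow_le; lra. lra. }
  exists b, nb, S. split; [|split; [exact HS|split; [rewrite EAf; exact HSN|]]].
  - intro k. split.
    + split; [|split; [|split]].
      * intros g hg. set (Wg := sum_f_R0 (fun t => Rabs (Anorm m l delta (g t))) k).
        apply (Arep_inA m d delta _ (ck k * Wg ^ k) hdel). apply Arep_Bk. lra. intros t ht.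
        eapply Arep_mono. apply inA_Arep; auto. unfold Wg.
        apply Rle_trans with (Rabs (Anorm m l delta (g t))). apply Rle_abs.
        apply Rle_trans with (sum_f_R0 (fun t0 => Rabs (Anorm m l delta (g t0))) t).
        destruct t. simpl; lra. rewrite tech5. pose proof (cond_pos_sum (fun t0 => Rabs (Anorm m l delta (g t0))) t (fun n => Rabs_pos _)). lra.
        apply sum_mono_le. intro; apply Rabs_pos. lia.
      * intros g g' hg hg' hgg. apply Bk_welldef. auto.
      * intros g j x y a hj hg hx hy z hz i hi. unfold b. rewrite Bk_lin by auto. unfold fadd, fscal. reflexivity.
      * intros g sg hsg hg z hz i hi. unfold b. apply Bk_sym. auto.
    + unfold nb. exact (proj2_sig (X k)).
  - intros g hg hgr.
    apply Un_cv_squeeze0 with (fun n => Nf - sum_f_R0 (norm_term l d rho eta) n).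
    2: apply tail_cv0; auto.
    intro n.
    assert (HR : Arep m d delta (fsub (fun z => f (g z)) (fsum (fun k => b k (fun _ => g)) n)) (Nf - sum_f_R0 (norm_term l d rho eta) n)).
    { apply (Arep_series m d delta _ (fun k => if (k <=? n)%nat then fun _ _ => C0 else b k (fun _ => g))
               (fun k => if (k <=? n)%nat then 0 else norm_term l d rho eta k)). lra.
      * intro k. destruct (k <=? n)%nat. eapply Arep_ext. 2: eapply Arep_mono. 2: apply (Arep_const m d delta (fun _ => C0)). auto.
        rewrite vnorm_zero; lra. rewrite Hnt. apply HAB; auto.
      * apply inf_tail; auto.
      * intros z hz i hi. unfold fsub. rewrite fsum_Csum.
        apply Ccv_ext_ev with (fun N => Csub (Csum (fun k => b k (fun _ => g) z i) N) (Csum (fun k => b k (fun _ => g) z i) n)) n.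
        intros N hN. rewrite <- Csum_tail by auto. apply Csum_ext. intros k _. destruct (k <=? n)%nat; reflexivity.
        apply Ccv_sub. apply Hpt; auto. apply Ccv_const. }
    destruct (Arep_inA _ _ _ _ _ hdel HR) as [h1 h2]. split; auto. apply Anorm_ge0; auto.
Qed.
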